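(* Consider $\min_{x\in\mathbb R^n}\varphi(x):=\frac1N\sum_{i=1}^Nf_i(x)+g(x)$ with $g$ proper, convex and lsc, and each $f_i$ differentiable with $L_{f_i}$-Lipschitz gradient and $\mu_{f_i}$-strongly convex ($\mu_{f_i}>0$); let $x^\star$ be the unique minimizer of $\varphi$, and let $(z^k)$ be generated by the Finito/MISO algorithm below. (a) Under the randomized sampling requirement, for all $k$: $\mathbb E[\varphi(z^k)-\min\varphi]\le(\varphi(x^{\mathrm{init}})-\min\varphi)(1-c)^k$ and $\frac12\mathbb E[\|z^k-x^\star\|^2]\le\frac{N(\varphi(x^{\mathrm{init}})-\min\varphi)}{\sum_i\mu_{f_i}}(1-c)^k$, where $c=\min_i\{\xi_ip_i/\gamma_i\}/\max_i\{(N-\gamma_i\mu_{f_i})/(\gamma_i^2\mu_{f_i})\}$ and $\xi_i=\frac{N-\gamma_iL_{f_i}}N$. If $\kappa_i:=L_{f_i}/\mu_{f_i}>1$ and $\gamma_i=\frac N{\mu_{f_i}}(1-\sqrt{1-1/\kappa_i})$, $p_i=\frac{(\sqrt{\kappa_i}+\sqrt{\kappa_i-1})^2}{\sum_j(\sqrt{\kappa_j}+\sqrt{\kappa_j-1})^2}$, the same holds with $c=1/\sum_i(\sqrt{\kappa_i}+\sqrt{\kappa_i-1})^2$. (b) Under shuffled cyclic sampling $I^{k+1}=\{\pi_{\lfloor k/N\rfloor}(\mathrm{mod}(k,N)+1)\}$ (permutations $\pi_\nu$ of $[N]$; includes the cyclic rule), for all $\nu\in\mathbb N$ surely: $\varphi(z^{\nu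 N})-\min\varphi\le(\varphi(x^{\mathrm{init}})-\min\varphi)(1-c)^\nu$ and $\frac12\|z^{\nu N}-x^\star\|^2\le\frac{N(\varphi(x^{\mathrm{init}})-\min\varphi)}{\sum_i\mu_{f_i}}(1-c)^\nu$, with $c=\frac{\delta(1-\Delta)}{N(2-\delta)^2(1-\delta)}$, $\delta=\min_i\frac{\gamma_i\mu_{f_i}}N$, $\Delta=\max_i\frac{\gamma_iL_{f_i}}N$.
   Context: Finito/MISO algorithm: choose $x^{\mathrm{init}}\in\mathbb R^n$ and $\gamma_i\in(0,N/L_{f_i})$; set $\hat\gamma=(\sum_i\gamma_i^{-1})^{-1}$, $s_i=x^{\mathrm{init}}-\frac{\gamma_i}N\nabla f_i(x^{\mathrm{init}})$ for $i\in[N]$, and $\hat s=\hat\gamma\sum_i\gamma_i^{-1}s_i$. At iteration $k=0,1,\dots$: select $I^{k+1}\subseteq[N]$; set $z^k=\operatorname{prox}_{\hat\gamma g}(\hat s)$; for each $i\in I^{k+1}$: $v=z^k-\frac{\gamma_i}N\nabla f_i(z^k)$, $\hat s\leftarrow\hat s+\frac{\hat\gamma}{\gamma_i}(v-s_i)$, $s_i\leftarrow v$. Here $\operatorname{prox}_{tg}(u)=\arg\min_w\{g(w)+\frac1{2t}\|w-u\|^2\}$. Randomized sampling requirement: there exist $p_1,\dots,p_N>0$ such that at every iteration, conditionally on the past, $\mathbb P(i\in I^{k+1})\ge p_i$ for all $i$. $\mathbb E$ denotes (unconditional) expectation. *)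

(* Defs.v *)
From mathcomp Require Import all_boot all_fingroup.
From Stdlib Require Import Reals.
Set Implicit Arguments. Unset Strict Implicit. Unset Printing Implicit Defensive.
Open Scope R_scope.

Definition vec (n : nat) := 'I_n -> R.
Definition vadd n (x y : vec n) : vec n := fun j => x j + y j.
Definition vsub n (x y : vec n) : vec n := fun j => x j - y j.
Definition vscale n (a : R) (x : vec n) : vec n := fun j => a * x j.
Definition inner n (x y : vec n) : R := \big[Rplus/0]_(j < n) (x j * y j).
Definition norm2 n (x : vec n) : R := inner x x.
Definition norm n (x : vec n) : R := sqrt (norm2 x).

Definition is_gradient n (f : vec n -> R) (G : vec n -> vec n) : Prop :=
  forall x eps, 0 < eps -> exists delta, 0 < delta /\
    forall h, norm h < delta ->
      Rabs (f (vadd x h) - f x - inner (G x) h) <= eps * norm h.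

Definition lipschitz_map n (L : R) (G : vec n -> vec n) : Prop :=
  forall x y, norm (vsub (G x) (G y)) <= L * norm (vsub x y).

(* mu-strong convexity (mu > 0 is required separately) *)
Definition strongly_convex n (mu : R) (f : vec n -> R) : Prop :=
  forall x y t, 0 <= t <= 1 ->
    f (vadd (vscale t x) (vscale (1 - t) y))
      <= t * f x + (1 - t) * f y - mu / 2 * t * (1 - t) * norm2 (vsub x y).

(* ---------- nonsmooth part: extended-real valued g : R^n -> R u {+oo} ----------
   g x = None encodes g x = +oo; values -oo are excluded by the type. *)
Definition proper_fun n (g : vec n -> option R) : Prop := exists x, g x <> None.

Definition convex_ext n (g : vec n -> option R) : Prop :=
  forall x y t a b, 0 <= t <= 1 -> g x = Some a -> g y = Some b ->
    exists c, g (vadd (vscale t x) (vscale (1 - t) y)) = Some c /\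
              c <= t * a + (1 - t) * b.

Definition ext_gt (a : R) (v : option R) : Prop :=
  match v with Some r => a < r | None => True end.

Definition lsc_ext n (g : vec n -> option R) : Prop :=
  forall x a, ext_gt a (g x) -> exists delta, 0 < delta /\
    forall y, norm (vsub y x) < delta -> ext_gt a (g y).

Definition is_prox n (t : R) (g : vec n -> option R) (u w : vec n) : Prop :=
  exists gw, g w = Some gw /\
    forall v gv, g v = Some gv ->
      gw + / (2 * t) * norm2 (vsub w u) <= gv + / (2 * t) * norm2 (vsub v u).

Definition sumI N (F : 'I_N -> R) : R := \big[Rplus/0]_(i < N) F i.

Definition phi n N (f : 'I_N -> vec n -> R) (g : vec n -> option R) (x : vec n)
  : option R :=
  match g x with Some r => Some (/ INR N * sumI (fun i => f i x) + r) | None => None end.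

(* real value of phi; only ever evaluated at points of dom g *)
Definition phiR n N (f : 'I_N -> vec n -> R) (g : vec n -> option R) (x : vec n) : R :=
  match phi f g x with Some r => r | None => 0 end.

Definition is_minimizer n N (f : 'I_N -> vec n -> R) (g : vec n -> option R)
  (xs : vec n) : Prop :=
  exists ms, phi f g xs = Some ms /\
    forall x v, phi f g x = Some v -> ms <= v.

(* min / max over a finite index set (meaningful for N > 0) *)
Definition minI N (F : 'I_N -> R) : R :=
  match [seq F i | i <- enum 'I_N] with [::] => 0 | a :: l => foldr Rmin a l end.
Definition maxI N (F : 'I_N -> R) : R :=
  match [seq F i | i <- enum 'I_N] with [::] => 0 | a :: l => foldr Rmax a l end.

(* state: (s_1..s_N, s_hat) *)
Definition fstate n N := (('I_N -> vec n) * vec n)%type.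

Definition gamhat N (gam : 'I_N -> R) : R := / sumI (fun i => / gam i).

Definition finito_init n N (gam : 'I_N -> R) (df : 'I_N -> vec n -> vec n)
  (xinit : vec n) : fstate n N :=
  let s := fun i => vsub xinit (vscale (gam i / INR N) (df i xinit)) in
  (s, vscale (gamhat gam)
        (fun j => sumI (fun i => / gam i * s i j))).

Definition finito_step n N (gam : 'I_N -> R) (df : 'I_N -> vec n -> vec n)
  (prox : vec n -> vec n) (st : fstate n N) (I : {set 'I_N}) : fstate n N :=
  let s := st.1 in let sh := st.2 in
  let z := prox sh in
  let v := fun i => vsub z (vscale (gam i / INR N) (df i z)) in
  ((fun i => if i \in I then v i else s i),
   vadd sh (fun j => \big[Rplus/0]_(i < N | i \in I)
                       (gamhat gam / gam i * (v i j - s i j)))).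

Definition finito_state n N gam df prox (xinit : vec n) (h : seq {set 'I_N})
  : fstate n N := foldl (finito_step gam df prox) (finito_init gam df xinit) h.

(* z^k = prox_{gamhat g}(s_hat) computed after the history I^1..I^k *)
Definition finito_z n N gam df (prox : vec n -> vec n) xinit (h : seq {set 'I_N})
  : vec n := prox (finito_state (N := N) gam df prox xinit h).2.

(* ---------- randomized sampling ----------
   q h S = probability that I^{k+1} = S given the past selections h = I^1..I^k.
   E_k[F] = expectation of F(I^1..I^k) under the process started from history h. *)
Fixpoint expect N (q : seq {set 'I_N} -> {set 'I_N} -> R) (k : nat)
  (h : seq {set 'I_N}) (F : seq {set 'I_N} -> R) : R :=
  match k with
  | O => F h
  | S k' => \big[Rplus/0]_(S : {set 'I_N}) (q h S * expect q k' (rcons h S) F)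
  end.

Definition sampling_kernel N (q : seq {set 'I_N} -> {set 'I_N} -> R) : Prop :=
  (forall h S, 0 <= q h S) /\
  (forall h, \big[Rplus/0]_(S : {set 'I_N}) q h S = 1).

Definition sampling_lower_bound N (q : seq {set 'I_N} -> {set 'I_N} -> R)
  (p : 'I_N -> R) : Prop :=
  forall h i, p i <= \big[Rplus/0]_(S : {set 'I_N} | i \in S) q h S.

(* ---------- shuffled cyclic sampling ----------
   I^{k+1} = { pi_{floor(k/N)} (mod(k,N)+1) }  (0-based: pi_{k/N}(k mod N)) *)
Definition shuffled_set N (pi : nat -> {perm 'I_N}) (k : nat) : {set 'I_N} :=
  pi (k %/ N)%N @: [set i : 'I_N | nat_of_ord i == (k %% N)%N].

Definition shuffled_hist N (pi : nat -> {perm 'I_N}) (k : nat) : seq {set 'I_N} :=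
  [seq shuffled_set pi j | j <- iota 0 k].

(* Main.v *)
From HB Require Import structures.
Require Import Defs.
From mathcomp Require Import all_boot all_fingroup.
From Stdlib Require Import Reals Lra Lia Psatz FunctionalExtensionality.
Open Scope R_scope.
Set Implicit Arguments. Unset Strict Implicit.


Lemma Rplus_assoc' : associative Rplus. Proof. by move=> *; rewrite Rplus_assoc. Qed.
HB.instance Definition _ := Monoid.isComLaw.Build R 0 Rplus Rplus_assoc' Rplus_comm Rplus_0_l.

Section Sums.
Variable I : finType.
Variable P : pred I.

Lemma sumR_add (F G : I -> R) :
  \big[Rplus/0]_(i | P i) (F i + G i) = \big[Rplus/0]_(i | P i) F i + \big[Rplus/0]_(i | P i) G i.
Proof. exact: big_split. Qed.

Lemma sumR_scal (c : R) (F : I -> R) :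
  \big[Rplus/0]_(i | P i) (c * F i) = c * \big[Rplus/0]_(i | P i) F i.
Proof.
elim/big_rec2: _ => [|i y1 y2 _ ->]; first by rewrite Rmult_0_r.
by rewrite Rmult_plus_distr_l.
Qed.

Lemma sumR_opp (F : I -> R) :
  \big[Rplus/0]_(i | P i) (- F i) = - \big[Rplus/0]_(i | P i) F i.
Proof.
elim/big_rec2: _ => [|i y1 y2 _ ->]; first by rewrite Ropp_0.
by rewrite Ropp_plus_distr.
Qed.

Lemma sumR_sub (F G : I -> R) :
  \big[Rplus/0]_(i | P i) (F i - G i) = \big[Rplus/0]_(i | P i) F i - \big[Rplus/0]_(i | P i) G i.
Proof. by rewrite sumR_add sumR_opp. Qed.

Lemma sumR_le (F G : I -> R) :
  (forall i, P i -> F i <= G i) ->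
  \big[Rplus/0]_(i | P i) F i <= \big[Rplus/0]_(i | P i) G i.
Proof.
move=> H; elim/big_rec2: _ => [|i y1 y2 Pi Hy]; first lra.
have := H i Pi; lra.
Qed.

Lemma sumR_ge0 (F : I -> R) :
  (forall i, P i -> 0 <= F i) -> 0 <= \big[Rplus/0]_(i | P i) F i.
Proof.
move=> H; elim/big_rec: _ => [|i y Pi Hy]; first lra.
have := H i Pi; lra.
Qed.

Lemma sumR_0 : \big[Rplus/0]_(i | P i) (0:R) = 0.
Proof. by rewrite big1. Qed.

End Sums.

Lemma sumR_ge_term (I : finType) (F : I -> R) i0 :
  (forall i, 0 <= F i) -> F i0 <= \big[Rplus/0]_(i : I) F i.
Proof.
move=> H; rewrite (bigD1 i0) //=.
have := @sumR_ge0 _ (fun i => i != i0) F (fun i _ => H i). lra.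
Qed.

Lemma sumR_mkcond (I : finType) (P : pred I) (F : I -> R) :
  \big[Rplus/0]_(i | P i) F i = \big[Rplus/0]_(i : I) (if P i then F i else 0).
Proof. exact: big_mkcond. Qed.

Lemma sumR_exchange (I J : finType) (F : I -> J -> R) :
  \big[Rplus/0]_(i : I) \big[Rplus/0]_(j : J) F i j =
  \big[Rplus/0]_(j : J) \big[Rplus/0]_(i : I) F i j.
Proof. exact: exchange_big. Qed.

Ltac sumfold := rewrite /Rminus; repeat (rewrite -sumR_scal || rewrite -sumR_opp || rewrite -sumR_add).

Section Vec.
Variable n : nat.
Implicit Types x y z a b d : vec n.

Lemma inner_sym x y : inner x y = inner y x.
Proof. rewrite /inner; apply: eq_bigr => j _; ring. Qed.

Lemma norm2_ge0 x : 0 <= norm2 x.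
Proof. apply: sumR_ge0 => j _; nra. Qed.

Lemma norm_ge0 x : 0 <= norm x.
Proof. exact: sqrt_pos. Qed.

Lemma norm_sq x : norm x * norm x = norm2 x.
Proof. rewrite /norm sqrt_sqrt //; exact: norm2_ge0. Qed.

Lemma inner_vscale_r t x y : inner x (vscale t y) = t * inner x y.
Proof. rewrite /inner -sumR_scal; apply: eq_bigr => j _; rewrite /vscale; ring. Qed.

Lemma inner_vsub_l x y d : inner (vsub x y) d = inner x d - inner y d.
Proof. rewrite /inner -sumR_sub; apply: eq_bigr => j _; rewrite /vsub; ring. Qed.

Lemma norm2_vscale t x : norm2 (vscale t x) = t * t * norm2 x.
Proof. rewrite /norm2 /inner -sumR_scal; apply: eq_bigr => j _; rewrite /vscale; ring. Qed.

Lemma norm_vscale t x : norm (vscale t x) = Rabs t * norm x.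
Proof.
rewrite /norm norm2_vscale sqrt_mult_alt; last by nra.
by rewrite sqrt_Rsqr_abs.
Qed.

Lemma norm2_zero : norm2 (fun _ : 'I_n => 0) = 0.
Proof. rewrite /norm2 /inner big1 // => j _; ring. Qed.

Lemma cauchy_schwarz x y : inner x y <= norm x * norm y.
Proof.
set X := inner x y; set A := norm2 x; set B := norm2 y.
have hA : 0 <= A := norm2_ge0 x. have hB : 0 <= B := norm2_ge0 y.
have quad : forall s, 0 <= s * s * A - 2 * s * X + B.
  move=> s.
  have -> : s * s * A - 2 * s * X + B = norm2 (vsub (vscale s x) y).
    rewrite /A /B /X /norm2 /inner; sumfold.
    apply: eq_bigr => j _; rewrite /vsub /vscale; ring.
  exact: norm2_ge0.
have key : X * X <= A * B.
  case: (Req_dec A 0) => hA0.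
  - have hX : X = 0.
      apply: Rle_antisym.
      + case: (Rle_lt_dec X 0) => // hX; exfalso.
        have := quad ((B + 1) / X). rewrite hA0 Rmult_0_r.
        have -> : 2 * ((B + 1) / X) * X = 2 * (B + 1) by (field; lra).
        move=> ?; lra.
      + case: (Rle_lt_dec 0 X) => // hX; exfalso.
        have := quad ((B + 1) / X). rewrite hA0 Rmult_0_r.
        have -> : 2 * ((B + 1) / X) * X = 2 * (B + 1) by (field; lra).
        move=> ?; lra.
    rewrite hX hA0; lra.
  - have hA' : 0 < A by lra.
    have := quad (X / A).
    have -> : X / A * (X / A) * A - 2 * (X / A) * X + B = B - X * X / A by field.
    move=> h.
    have : X * X / A <= B by lra.
    move=> h2.
    have e : X * X = (X * X / A) * A by (field; lra).
    rewrite e; nra.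
have h1 : X <= sqrt (X * X).
  have -> : sqrt (X * X) = Rabs X by exact: sqrt_Rsqr_abs.
  exact: Rle_abs.
apply: (Rle_trans _ _ _ h1).
rewrite /norm -sqrt_mult //; apply: sqrt_le_1_alt; exact: key.
Qed.
End Vec.



Lemma lim_le (X B C s0 : R) : 0 < s0 ->
  (forall s, 0 < s < s0 -> X <= B + s * C) -> X <= B.
Proof.
move=> hs0 H.
case: (Rle_lt_dec X B) => // hXB; exfalso.
set s := Rmin (s0 / 2) ((X - B) / (2 * (Rabs C + 1))).
have hC := Rabs_pos C.
have hs1 : 0 < s.
  apply: Rmin_pos; first lra.
  apply: Rdiv_lt_0_compat; lra.
have hs2 : s < s0 by have := Rmin_l (s0/2) ((X - B) / (2 * (Rabs C + 1))); rewrite -/s; lra.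
have hs3 : s <= (X - B) / (2 * (Rabs C + 1)) by apply: Rmin_r.
have := H s (conj hs1 hs2).
have : s * C <= s * Rabs C by apply: Rmult_le_compat_l; [lra | apply: Rle_abs].
have : s * (Rabs C + 1) <= (X - B) / 2.
  have -> : (X - B) / 2 = (X - B) / (2 * (Rabs C + 1)) * (Rabs C + 1) by field; lra.
  apply: Rmult_le_compat_r; lra.
nra.
Qed.

Lemma eps_le (X : R) : (forall e, 0 < e -> X <= e) -> X <= 0.
Proof.
move=> H; apply: (@lim_le X 0 1 1); first lra.
move=> s hs; have := H s (proj1 hs); lra.
Qed.

Section Vec2.
Variable n : nat.
Implicit Types x y z a b d : vec n.

Lemma vadd_line x d t h :
  vadd (vadd x (vscale t d)) (vscale h d) = vadd x (vscale (t + h) d).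
Proof. apply: functional_extensionality => j; rewrite /vadd /vscale; ring. Qed.

Lemma vsub_line x d t : vsub (vadd x (vscale t d)) x = vscale t d.
Proof. apply: functional_extensionality => j; rewrite /vadd /vsub /vscale; ring. Qed.

Lemma line1 x y : vadd x (vscale 1 (vsub y x)) = y.
Proof. apply: functional_extensionality => j; rewrite /vadd /vsub /vscale; ring. Qed.

Lemma line0 x d : vadd x (vscale 0 d) = x.
Proof. apply: functional_extensionality => j; rewrite /vadd /vscale; ring. Qed.

Variable f : vec n -> R.
Variable G : vec n -> vec n.
Hypothesis Hg : is_gradient f G.

Lemma deriv_line x d t :
  derivable_pt_lim (fun t => f (vadd x (vscale t d))) t (inner (G (vadd x (vscale t d))) d).
Proof.
move=> eps heps.
set y := vadd x (vscale t d).
have hnd := norm_ge0 d.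
set nd := norm d in hnd *.
have he' : 0 < eps / (2 * (nd + 1)) by apply: Rdiv_lt_0_compat; lra.
have [del [hdel H]] := Hg y he'.
have hdel' : 0 < del / (nd + 1) by apply: Rdiv_lt_0_compat; lra.
exists (mkposreal _ hdel') => h hh0 /= hlt.
rewrite -vadd_line -/y.
have hh : 0 < Rabs h by apply: Rabs_pos_lt.
have hn : norm (vscale h d) < del.
  rewrite norm_vscale -/nd.
  have : Rabs h * (nd + 1) < del.
    have -> : del = del / (nd + 1) * (nd + 1) by field; lra.
    apply: Rmult_lt_compat_r; lra.
  nra.
have := H _ hn.
rewrite inner_vscale_r norm_vscale -/nd.
set A := f (vadd y (vscale h d)) - f y.
set I := inner (G y) d.
move=> hA.
have -> : A / h - I = (A - h * I) / h by field.
have e1 : eps / (2 * (nd + 1)) * nd < eps.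
  have -> : eps / (2 * (nd + 1)) * nd = eps * (nd / (2 * (nd + 1))) by field; lra.
  have : nd / (2 * (nd + 1)) < 1.
    have -> : nd / (2 * (nd + 1)) = 1 - (nd + 2) / (2 * (nd + 1)) by field; lra.
    have : 0 < (nd + 2) / (2 * (nd + 1)) by apply: Rdiv_lt_0_compat; lra.
    lra.
  nra.
rewrite /Rdiv Rabs_mult Rabs_inv.
apply: (Rmult_lt_reg_r (Rabs h)) => //.
have -> : Rabs (A - h * I) * / Rabs h * Rabs h = Rabs (A - h * I) by field; lra.
have : eps / (2 * (nd + 1)) * (Rabs h * nd) < eps * Rabs h by nra.
move=> ?; clear hh0; lra.
Qed.

Hypothesis (L : R) (HL : lipschitz_map L G).

Lemma descent x y :
  f y <= f x + inner (G x) (vsub y x) + L / 2 * norm2 (vsub y x).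
Proof.
set d := vsub y x.
set a := inner (G x) d.
set b := L / 2 * norm2 d.
pose psi := fun t => f (vadd x (vscale t d)) - (a * t + b * (t * t)).
pose psi' := fun t => inner (G (vadd x (vscale t d))) d - (a * 1 + b * (1 * t + t * 1)).
have Hd : forall c, 0 <= c <= 1 -> derivable_pt_lim psi c (psi' c).
  move=> c _.
  have H1 := deriv_line x d c.
  have H2 : derivable_pt_lim (fun t => a * t + b * (t * t)) c (a * 1 + b * (1 * c + c * 1)).
    have := derivable_pt_lim_plus _ _ _ _ _
      (derivable_pt_lim_scal _ a _ _ (derivable_pt_lim_id c))
      (derivable_pt_lim_scal _ b _ _ (derivable_pt_lim_mult _ _ _ _ _ (derivable_pt_lim_id c) (derivable_pt_lim_id c))).
    by [].
  exact: (derivable_pt_lim_minus _ _ _ _ _ H1 H2).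
have [c [hc hcr]] := MVT_cor2 psi psi' 0 1 Rlt_0_1 Hd.
have hpsi' : psi' c <= 0.
  rewrite /psi'.
  have hcs := cauchy_schwarz (vsub (G (vadd x (vscale c d))) (G x)) d.
  rewrite inner_vsub_l in hcs.
  have hl := HL (vadd x (vscale c d)) x.
  rewrite vsub_line norm_vscale Rabs_pos_eq in hl; last lra.
  have hnd := norm_ge0 d.
  have hsq := norm_sq d.
  have hng := norm_ge0 (vsub (G (vadd x (vscale c d))) (G x)).
  rewrite /b.
  have : norm (vsub (G (vadd x (vscale c d))) (G x)) * norm d <= L * c * norm d * norm d.
    apply: Rmult_le_compat_r => //. lra.
  move=> h'; rewrite /a; nra.
have : psi 1 <= psi 0 by nra.
rewrite /psi line0 -/d line1; lra.
Qed.

Hypothesis (mu : R) (Hsc : strongly_convex mu f).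

Lemma sc_lower x y :
  f x + inner (G x) (vsub y x) + mu / 2 * norm2 (vsub y x) <= f y.
Proof.
have hnd := norm_ge0 (vsub y x).
have hn2 := norm2_ge0 (vsub y x).
suff : f x + inner (G x) (vsub y x) + mu / 2 * norm2 (vsub y x) - f y <= 0 by lra.
apply: eps_le => e he.
have he' : 0 < e / (2 * (norm (vsub y x) + 1)) by apply: Rdiv_lt_0_compat; lra.
have [del [hdel H]] := Hg x he'.
have ht0 : 0 < Rmin 1 (del / (norm (vsub y x) + 1)).
  apply: Rmin_pos; [lra | apply: Rdiv_lt_0_compat; lra].
have hB : e / (2 * (norm (vsub y x) + 1)) * norm (vsub y x) <= e.
  have -> : e / (2 * (norm (vsub y x) + 1)) * norm (vsub y x)
           = e * (norm (vsub y x) / (2 * (norm (vsub y x) + 1))) by field; lra.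
  have : norm (vsub y x) / (2 * (norm (vsub y x) + 1)) <= 1.
    have -> : norm (vsub y x) / (2 * (norm (vsub y x) + 1))
           = 1 - (norm (vsub y x) + 2) / (2 * (norm (vsub y x) + 1)) by field; lra.
    have : 0 < (norm (vsub y x) + 2) / (2 * (norm (vsub y x) + 1)) by apply: Rdiv_lt_0_compat; lra.
    lra.
  nra.
suff : f x + inner (G x) (vsub y x) + mu / 2 * norm2 (vsub y x) - f y <=
       e / (2 * (norm (vsub y x) + 1)) * norm (vsub y x) by lra.
apply: (lim_le (C := mu / 2 * norm2 (vsub y x)) ht0) => t [ht1 ht2].
have ht3 : t < 1 by have := Rmin_l 1 (del / (norm (vsub y x) + 1)); lra.
have ht4 : t < del / (norm (vsub y x) + 1) by have := Rmin_r 1 (del / (norm (vsub y x) + 1)); lra.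
have hsc := Hsc y x (conj (Rlt_le _ _ ht1) (Rlt_le _ _ ht3)).
have e1 : vadd (vscale t y) (vscale (1 - t) x) = vadd x (vscale t (vsub y x)).
  by apply: functional_extensionality => j; rewrite /vadd /vscale /vsub; ring.
rewrite e1 in hsc.
have hn : norm (vscale t (vsub y x)) < del.
  rewrite norm_vscale Rabs_pos_eq; last lra.
  have : t * (norm (vsub y x) + 1) < del.
    have -> : del = del / (norm (vsub y x) + 1) * (norm (vsub y x) + 1) by field; lra.
    apply: Rmult_lt_compat_r; lra.
  nra.
have hE := H _ hn.
have ht0' : 0 <= t by lra.
rewrite inner_vscale_r norm_vscale (Rabs_pos_eq _ ht0') in hE.
set E := f (vadd x (vscale t (vsub y x))) - f x - t * inner (G x) (vsub y x) in hE.
have h1 := Rle_abs E; have h2 : - E <= Rabs E by rewrite -Rabs_Ropp; apply: Rle_abs.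
rewrite /E in h1 h2.
set X := f x + inner (G x) (vsub y x) + mu / 2 * norm2 (vsub y x) - f y.
apply: (Rmult_le_reg_l t) => //.
rewrite /X; rewrite /E in hE; nra.
Qed.
End Vec2.




Lemma foldr_min_props (a : R) (l : seq R) :
  (forall x, List.In x (a :: l) -> foldr Rmin a l <= x) /\ List.In (foldr Rmin a l) (a :: l).
Proof.
elim: l => [|b l [IH1 IH2]] /=.
  split; [move=> x [<-|[]]; lra | by left].
split.
  move=> x [<-|[<-|hx]].
  - apply: (Rle_trans _ _ _ (Rmin_r _ _)); apply: IH1; by left.
  - exact: Rmin_l.
  - apply: (Rle_trans _ _ _ (Rmin_r _ _)); apply: IH1; by right.
rewrite /Rmin; case: (Rle_dec b (foldr Rmin a l)) => _.
  by right; left.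
case: IH2 => [<-|h]; [by left | by right; right].
Qed.

Lemma foldr_max_props (a : R) (l : seq R) :
  (forall x, List.In x (a :: l) -> x <= foldr Rmax a l) /\ List.In (foldr Rmax a l) (a :: l).
Proof.
elim: l => [|b l [IH1 IH2]] /=.
  split; [move=> x [<-|[]]; lra | by left].
split.
  move=> x [<-|[<-|hx]].
  - apply: (Rle_trans _ _ _ _ (Rmax_r _ _)); apply: IH1; by left.
  - exact: Rmax_l.
  - apply: (Rle_trans _ _ _ _ (Rmax_r _ _)); apply: IH1; by right.
rewrite /Rmax; case: (Rle_dec b (foldr Rmax a l)) => _.
  case: IH2 => [<-|h]; [by left | by right; right].
by right; left.
Qed.

Lemma in_map_ord N (F : 'I_N -> R) (sq : seq 'I_N) i : i \in sq -> List.In (F i) [seq F j | j <- sq].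
Proof.
elim: sq => [|a sq IH] //=; rewrite in_cons => /orP [/eqP ->|h]; [by left | by right; apply: IH].
Qed.

Lemma map_ord_in N (F : 'I_N -> R) (sq : seq 'I_N) x : List.In x [seq F j | j <- sq] -> exists i, x = F i.
Proof.
elim: sq => [|a sq IH] //= [<-|h]; [by exists a | exact: IH].
Qed.

Lemma minI_le N (F : 'I_N -> R) i : minI F <= F i.
Proof.
rewrite /minI.
have := in_map_ord F (mem_enum (T := 'I_N) predT i).
case: [seq F j | j <- enum 'I_N] => [|a l] // hin.
exact: (proj1 (foldr_min_props a l)).
Qed.

Lemma le_maxI N (F : 'I_N -> R) i : F i <= maxI F.
Proof.
rewrite /maxI.
have := in_map_ord F (mem_enum (T := 'I_N) predT i).
case: [seq F j | j <- enum 'I_N] => [|a l] // hin.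
exact: (proj1 (foldr_max_props a l)).
Qed.

Lemma minI_mem N (F : 'I_N -> R) (i0 : 'I_N) : exists i, minI F = F i.
Proof.
rewrite /minI.
have := in_map_ord F (mem_enum (T := 'I_N) predT i0).
have := @map_ord_in N F (enum 'I_N).
case: [seq F j | j <- enum 'I_N] => [|a l] // hm _.
exact: hm (proj2 (foldr_min_props a l)).
Qed.

Lemma maxI_mem N (F : 'I_N -> R) (i0 : 'I_N) : exists i, maxI F = F i.
Proof.
rewrite /maxI.
have := in_map_ord F (mem_enum (T := 'I_N) predT i0).
have := @map_ord_in N F (enum 'I_N).
case: [seq F j | j <- enum 'I_N] => [|a l] // hm _.
exact: hm (proj2 (foldr_max_props a l)).
Qed.

Lemma tuned (NN m Lc : R) : 0 < NN -> 0 < m -> 1 < Lc / m ->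
  (NN - NN / m * (1 - sqrt (1 - / (Lc / m))) * m) /
    (2 * ((NN / m * (1 - sqrt (1 - / (Lc / m)))) ^ 2 * m))
  <= (/ (2 * (NN / m * (1 - sqrt (1 - / (Lc / m))))) - Lc / (2 * NN)) *
     (sqrt (Lc / m) + sqrt (Lc / m - 1)) ^ 2.
Proof.
move=> hN hm hk.
have hLc : Lc = Lc / m * m by field; lra.
move: (Lc / m) hk hLc => k hk hLc.
rewrite hLc.
have ht := sqrt_sqrt k ltac:(lra).
have hv := sqrt_sqrt (k - 1) ltac:(lra).
have ht0 : 1 < sqrt k.
  rewrite -sqrt_1; apply: sqrt_lt_1_alt; lra.
have hv0 : 0 < sqrt (k - 1) by apply: sqrt_lt_R0; lra.
have hs : sqrt (1 - / k) = sqrt (k - 1) / sqrt k.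
  have -> : 1 - / k = (sqrt (k - 1) / sqrt k) * (sqrt (k - 1) / sqrt k).
    rewrite /Rdiv.
    have -> : sqrt (k - 1) * / sqrt k * (sqrt (k - 1) * / sqrt k) = (sqrt (k - 1) * sqrt (k - 1)) / (sqrt k * sqrt k) by field; lra.
    rewrite ht hv; field; lra.
  apply: sqrt_square; apply: Rlt_le; apply: Rdiv_lt_0_compat; lra.
rewrite hs.
move: (sqrt k) (sqrt (k - 1)) ht hv ht0 hv0 => t v ht hv ht0 hv0.
have hk' : k = t * t by [].
rewrite hk'.
have hD : 0 < t - v by nra.
have hTV : (t + v) * (t - v) = 1 by nra.
have [D [hD' [et ev]]] : exists D, 0 < D /\ t = (D + / D) / 2 /\ v = (/ D - D) / 2.
  exists (t - v); split => //.
  have hinv : / (t - v) = t + v.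
    have e : t + v = (t + v) * (t - v) / (t - v) by field; lra.
    by rewrite e hTV /Rdiv Rmult_1_l.
  rewrite hinv; split; field.
rewrite ev et.
apply: Req_le.
field.
repeat split; nra.
Qed.

Lemma cb_bound (NN d D : R) : 1 <= NN -> 0 < d -> d <= D -> D < 1 ->
  0 <= d * (1 - D) / (NN * (2 - d) ^ 2 * (1 - d)) /\
  d * (1 - D) / (NN * (2 - d) ^ 2 * (1 - d)) * (1 + NN * (1 - d) / d) <= 1.
Proof.
move=> hN hd hdD hD.
have h2 : 0 < (2 - d) ^ 2 by apply: pow_lt; lra.
have hden : 0 < NN * (2 - d) ^ 2 * (1 - d) by apply: Rmult_lt_0_compat; [apply: Rmult_lt_0_compat|]; lra.
split.
  apply: Rmult_le_pos; [apply: Rmult_le_pos; lra | apply: Rlt_le; exact: Rinv_0_lt_compat].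
have e : d * (1 - D) / (NN * (2 - d) ^ 2 * (1 - d)) * (1 + NN * (1 - d) / d)
   = (1 - D) * (d + NN * (1 - d)) / (NN * (2 - d) ^ 2 * (1 - d)) by field; lra.
rewrite e.
have : (1 - D) * (d + NN * (1 - d)) <= NN * (2 - d) ^ 2 * (1 - d).
  have : (1 - D) * (d + NN * (1 - d)) <= (1 - d) * (d + NN * (1 - d)).
    apply: Rmult_le_compat_r; nra.
  have : d + NN * (1 - d) <= NN * (2 - d) ^ 2.
    have -> : (2 - d) ^ 2 = (1 - d) + (3 - 3 * d + d * d) by simpl; ring.
    have : d <= 3 - 3 * d + d * d by nra.
    nra.
  nra.
move=> h.
apply: (Rmult_le_reg_r (NN * (2 - d) ^ 2 * (1 - d))) => //.
rewrite Rmult_1_l /Rdiv Rmult_assoc Rinv_l; lra.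
Qed.

Lemma vec0_eq (n : nat) (hn : n = 0%nat) (x y : vec n) : x = y.
Proof.
apply: functional_extensionality => j; exfalso; move: (ltn_ord j); move: (nat_of_ord j); rewrite hn. done.
Qed.

Section Finito.
Variables (n N : nat).
Hypothesis HN : (0 < N)%nat.
Variables (f : 'I_N -> vec n -> R) (df : 'I_N -> vec n -> vec n) (L mu : 'I_N -> R).
Hypothesis Hgrad : forall i, is_gradient (f i) (df i).
Hypothesis HL : forall i, lipschitz_map (L i) (df i).
Hypothesis Hmu_pos : forall i, 0 < mu i.
Hypothesis Hsc : forall i, strongly_convex (mu i) (f i).
Variable g : vec n -> option R.
Hypothesis Hg_convex : convex_ext g.
Variable xstar : vec n.
Hypothesis Hxstar : is_minimizer f g xstar.
Variable gam : 'I_N -> R.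
Hypothesis Hgam : forall i, 0 < gam i < INR N / L i.
Variable prox : vec n -> vec n.
Hypothesis Hprox : forall u, is_prox (gamhat gam) g u (prox u).
Variables (xinit : vec n) (ginit : R).
Hypothesis Hxinit : g xinit = Some ginit.

Definition NR := INR N.
Lemma NR_pos : 0 < NR.
Proof. rewrite /NR; apply: lt_0_INR; exact/ltP. Qed.

Definition i0 : 'I_N := Ordinal HN.

Definition W := sumI (fun i => / gam i).
Lemma W_pos : 0 < W.
Proof.
rewrite /W /sumI.
apply: (Rlt_le_trans _ (/ gam i0)); first by apply: Rinv_0_lt_compat; case: (Hgam i0).
apply: sumR_ge_term => i; apply: Rlt_le; apply: Rinv_0_lt_compat; case: (Hgam i) => //.
Qed.

Lemma gamhat_W : gamhat gam = / W.
Proof. by []. Qed.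

Definition sv (u : 'I_N -> vec n) i := vsub (u i) (vscale (gam i / INR N) (df i (u i))).
Definition shat (u : 'I_N -> vec n) : vec n :=
  vscale (gamhat gam) (fun j => sumI (fun i => / gam i * sv u i j)).
Definition zz u := prox (shat u).
Definition ustep (u : 'I_N -> vec n) (I : {set 'I_N}) : 'I_N -> vec n :=
  fun i => if i \in I then zz u else u i.

Definition gstep (p : fstate n N * ('I_N -> vec n)) (I : {set 'I_N}) :=
  (finito_step gam df prox p.1 I, fun i => if i \in I then prox p.1.2 else p.2 i).

Definition gstate (h : seq {set 'I_N}) :=
  foldl gstep (finito_init gam df xinit, fun _ => xinit) h.

Definition uh h := (gstate h).2.

Lemma gstate_fst h : (gstate h).1 = finito_state gam df prox xinit h.
Proof.
rewrite /gstate /finito_state.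
have gen : forall p h0, (foldl gstep p h0).1 = foldl (finito_step gam df prox) p.1 h0.
  by move=> p h0; elim: h0 p => [|S h0 IH] p //=; rewrite IH.
exact: gen.
Qed.

Lemma step_inv (u : 'I_N -> vec n) I :
  finito_step gam df prox (sv u, shat u) I =
  (sv (fun i => if i \in I then prox (shat u) else u i),
   shat (fun i => if i \in I then prox (shat u) else u i)).
Proof.
rewrite /finito_step /=; congr pair.
  apply: functional_extensionality => i; rewrite /sv; by case: (i \in I).
apply: functional_extensionality => j.
rewrite /vadd /shat /vscale /sumI.
rewrite (sumR_mkcond (fun i => i \in I)).
sumfold.
apply: eq_bigr => i _.
rewrite /sv /vsub /vscale /gamhat; have := NR_pos; rewrite /NR => hN; case: (Hgam i) => hg1 hg2; case: (i \in I) => /=; have := W_pos; rewrite /W => hW; field; repeat split; lra.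
Qed.

Lemma gstate_inv h : (gstate h).1 = (sv (uh h), shat (uh h)).
Proof.
rewrite /uh.
elim/last_ind: h => [|h S IH]; first by [].
rewrite /gstate foldl_rcons -/(gstate h).
by rewrite /gstep /= IH step_inv.
Qed.

Lemma zk_uh h : finito_z gam df prox xinit h = zz (uh h).
Proof. by rewrite /finito_z -gstate_fst gstate_inv. Qed.

Lemma uh_rcons h S : uh (rcons h S) = ustep (uh h) S.
Proof.
rewrite /uh /gstate foldl_rcons -/(gstate h) /gstep /=.
by rewrite gstate_inv.
Qed.

Lemma uh_nil : uh [::] = fun _ => xinit.
Proof. by []. Qed.

Lemma uh_cat h s : uh (h ++ s) = foldl ustep (uh h) s.
Proof.
elim/last_ind: s => [|s S IH]; first by rewrite cats0.
by rewrite -rcons_cat uh_rcons IH foldl_rcons.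
Qed.


Lemma sumR_scal_r (I : finType) (P : pred I) (c : R) (F : I -> R) :
  \big[Rplus/0]_(i | P i) (F i * c) = (\big[Rplus/0]_(i | P i) F i) * c.
Proof. rewrite Rmult_comm -sumR_scal; apply: eq_bigr => i _; ring. Qed.

Ltac sumfold2 := rewrite /Rminus /Rdiv; repeat (rewrite -sumR_scal || rewrite -sumR_scal_r || rewrite -sumR_opp || rewrite -sumR_add).

Lemma sub_cancel (a b c d e : R) : (a + b + c) - (a + d + e) = (b - d) + (c - e).
Proof. ring. Qed.

Definition mi (u : 'I_N -> vec n) i (x : vec n) :=
  f i (u i) / INR N + inner (df i (u i)) (vsub x (u i)) / INR N
  + / (2 * gam i) * norm2 (vsub x (u i)).

Definition Mval (u : 'I_N -> vec n) (x : vec n) :=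
  match g x with Some r => r + sumI (fun i => mi u i x) | None => 0 end.

Definition V u := Mval u (zz u).

Lemma gam_pos i : 0 < gam i. Proof. by case: (Hgam i). Qed.

Lemma M_diff u x z :
  sumI (fun i => mi u i x) - sumI (fun i => mi u i z) =
  / (2 * gamhat gam) * (norm2 (vsub x (shat u)) - norm2 (vsub z (shat u))).
Proof.
have hW := W_pos; have hN := NR_pos.
rewrite gamhat_W.
have e1 : forall i, mi u i x - mi u i z =
   \big[Rplus/0]_(j < n) (/ (2 * gam i) * (x j * x j - z j * z j)
                       - (x j - z j) * (/ gam i * sv u i j)).
  move=> i; rewrite /mi sub_cancel /inner /norm2 /sv /vsub /vscale; sumfold2.
  apply: eq_bigr => j _. have := gam_pos i; rewrite /NR in hN => hg. field; lra.
rewrite /sumI -sumR_sub (eq_bigr _ (fun i _ => e1 i)) sumR_exchange.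
rewrite /norm2 /inner; sumfold.
apply: eq_bigr => j _.
rewrite sumR_sub.
have -> : \big[Rplus/0]_(i < N) (/ (2 * gam i) * (x j * x j - z j * z j))
          = W / 2 * (x j * x j - z j * z j).
  rewrite (_ : W / 2 * (x j * x j - z j * z j) = W * (/ 2 * (x j * x j - z j * z j))); last by field.
  rewrite /W /sumI -sumR_scal_r; apply: eq_bigr => i _; have := gam_pos i => hg; field; lra.
rewrite sumR_scal /shat /vsub /vscale gamhat_W.
rewrite -/(sumI (fun i => / gam i * sv u i j)).
field; lra.
Qed.

Lemma norm2_conv (x z sh : vec n) s :
  norm2 (vsub (vadd (vscale s x) (vscale (1 - s) z)) sh) =
  norm2 (vsub z sh) + 2 * s * inner (vsub z sh) (vsub x z) + s * s * norm2 (vsub x z).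
Proof.
rewrite /norm2 /inner; sumfold; apply: eq_bigr => j _.
rewrite /vsub /vadd /vscale; ring.
Qed.

Lemma norm2_split (x z sh : vec n) :
  norm2 (vsub x sh) =
  norm2 (vsub z sh) + 2 * inner (vsub z sh) (vsub x z) + norm2 (vsub x z).
Proof.
rewrite /norm2 /inner; sumfold; apply: eq_bigr => j _.
rewrite /vsub; ring.
Qed.

Lemma prox_growth u x gx : g x = Some gx ->
  exists gz, g (zz u) = Some gz /\
    gz + / (2 * gamhat gam) * norm2 (vsub (zz u) (shat u))
       + / (2 * gamhat gam) * norm2 (vsub x (zz u))
    <= gx + / (2 * gamhat gam) * norm2 (vsub x (shat u)).
Proof.
move=> hx.
have [gz [hz hmin]] := Hprox (shat u).
exists gz; split => //.
rewrite /zz.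
have ht : 0 < gamhat gam by rewrite gamhat_W; apply: Rinv_0_lt_compat; exact: W_pos.
move: (gamhat gam) ht hmin => t ht hmin.
move: (prox (shat u)) hz hmin => z hz hmin.
move: (shat u) hmin => sh hmin.
have hit : 0 < / (2 * t) by apply: Rinv_0_lt_compat; lra.
have key : gz <= gx + / t * inner (vsub z sh) (vsub x z).
  have hn := norm2_ge0 (vsub x z).
  apply: (lim_le (C := / (2 * t) * norm2 (vsub x z)) Rlt_0_1) => s [hs1 hs2].
  have [c [hc hcle]] := Hg_convex (conj (Rlt_le _ _ hs1) (Rlt_le _ _ hs2)) hx hz.
  have := hmin _ _ hc.
  rewrite norm2_conv.
  move=> hm.
  have : s * gz <= s * (gx + / t * inner (vsub z sh) (vsub x z) + s * (/ (2 * t) * norm2 (vsub x z))).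
    have -> : / t = 2 * / (2 * t) by field; lra.
    nra.
  move=> hh; apply: (Rmult_le_reg_l s) => //.
have := norm2_split x z sh.
have et : / t = 2 * / (2 * t) by field; lra.
rewrite et in key.
nra.
Qed.


Lemma zz_dom u : exists gz, g (zz u) = Some gz.
Proof. have [gz [hz _]] := Hprox (shat u). by exists gz. Qed.

Lemma V_growth u x gx : g x = Some gx ->
  V u + / (2 * gamhat gam) * norm2 (vsub x (zz u)) <= Mval u x.
Proof.
move=> hx.
have [gz [hz hg]] := prox_growth u hx.
have hd := M_diff u x (zz u).
rewrite /V /Mval hx hz; lra.
Qed.

Lemma vsub_self (x : vec n) : vsub x x = fun _ => 0.
Proof. apply: functional_extensionality => j; rewrite /vsub; ring. Qed.

Lemma inner_zero_r (x : vec n) : inner x (fun _ => 0) = 0.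
Proof. rewrite /inner big1 // => j _; ring. Qed.

Lemma mi_self u i : mi u i (u i) = f i (u i) / INR N.
Proof. rewrite /mi vsub_self inner_zero_r norm2_zero /Rdiv; ring. Qed.

Definition ac i := / (2 * gam i) - L i / (2 * INR N).
Definition bc i := / (2 * gam i) - mu i / (2 * INR N).
Definition betac i := (INR N - gam i * mu i) / (2 * (gam i ^ 2 * mu i)).

Lemma ac_pos i : 0 < ac i.
Proof.
have hN := NR_pos; rewrite /NR in hN.
have [h1 h2] := Hgam i.
rewrite /ac.
have hL : 0 < L i.
  case: (Rle_lt_dec (L i) 0) => // hL; exfalso.
  case: (Req_dec (L i) 0) => hL0.
    rewrite hL0 /Rdiv Rinv_0 Rmult_0_r in h2; lra.
  have : INR N / L i < 0.
    rewrite /Rdiv; apply: Rmult_pos_neg => //; apply: Rinv_lt_0_compat; lra.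
  lra.
have : gam i * L i < INR N.
  have := Rmult_lt_compat_r (L i) _ _ hL h2.
  rewrite /Rdiv Rmult_assoc Rinv_l; lra.
move=> h3.
have -> : / (2 * gam i) - L i / (2 * INR N) = (INR N - gam i * L i) / (2 * gam i * INR N) by field; lra.
apply: Rdiv_lt_0_compat; nra.
Qed.

Lemma mi_upper u i x : f i x / INR N + ac i * norm2 (vsub x (u i)) <= mi u i x.
Proof.
have hN := NR_pos; rewrite /NR in hN.
have hd := descent (Hgrad i) (HL i) (u i) x.
rewrite /mi /ac.
have hg := gam_pos i.
have e : forall a b, a / INR N <= b / INR N -> a <= b.
  move=> a b h; apply: (Rmult_le_reg_r (/ INR N)); [by apply: Rinv_0_lt_compat | exact h].
suff : f i x <= f i (u i) + inner (df i (u i)) (vsub x (u i)) + L i / 2 * norm2 (vsub x (u i)).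
  move=> h.
  have : f i x / INR N <= (f i (u i) + inner (df i (u i)) (vsub x (u i)) + L i / 2 * norm2 (vsub x (u i))) / INR N.
    apply: Rmult_le_compat_r => //; apply: Rlt_le; apply: Rinv_0_lt_compat; lra.
  have -> : (f i (u i) + inner (df i (u i)) (vsub x (u i)) + L i / 2 * norm2 (vsub x (u i))) / INR N
     = f i (u i) / INR N + inner (df i (u i)) (vsub x (u i)) / INR N + L i / (2 * INR N) * norm2 (vsub x (u i)) by field; lra.
  lra.
exact: hd.
Qed.

Lemma mi_lower u i x : mi u i x <= f i x / INR N + bc i * norm2 (vsub x (u i)).
Proof.
have hN := NR_pos; rewrite /NR in hN.
have hd := sc_lower (Hgrad i) (Hsc i) (u i) x.
rewrite /mi /bc.
have hg := gam_pos i.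
have : (f i (u i) + inner (df i (u i)) (vsub x (u i)) + mu i / 2 * norm2 (vsub x (u i))) / INR N <= f i x / INR N.
  apply: Rmult_le_compat_r => //; apply: Rlt_le; apply: Rinv_0_lt_compat; lra.
have -> : (f i (u i) + inner (df i (u i)) (vsub x (u i)) + mu i / 2 * norm2 (vsub x (u i))) / INR N
   = f i (u i) / INR N + inner (df i (u i)) (vsub x (u i)) / INR N + mu i / (2 * INR N) * norm2 (vsub x (u i)) by field; lra.
lra.
Qed.

Lemma phiR_dom x gx : g x = Some gx -> phiR f g x = / INR N * sumI (fun i => f i x) + gx.
Proof. by move=> hx; rewrite /phiR /phi hx. Qed.

Lemma sum_fdiv x : / INR N * sumI (fun i => f i x) = sumI (fun i => f i x / INR N).
Proof. rewrite /sumI -sumR_scal; apply: eq_bigr => i _; rewrite /Rdiv; ring. Qed.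

Lemma M_upper u x gx : g x = Some gx ->
  phiR f g x + sumI (fun i => ac i * norm2 (vsub x (u i))) <= Mval u x.
Proof.
move=> hx; rewrite (phiR_dom hx) /Mval hx sum_fdiv.
have : sumI (fun i => f i x / INR N) + sumI (fun i => ac i * norm2 (vsub x (u i))) <= sumI (fun i => mi u i x).
  rewrite /sumI -sumR_add; apply: sumR_le => i _; exact: mi_upper.
lra.
Qed.

Lemma M_lower u x gx : g x = Some gx ->
  Mval u x <= phiR f g x + sumI (fun i => bc i * norm2 (vsub x (u i))).
Proof.
move=> hx; rewrite (phiR_dom hx) /Mval hx sum_fdiv.
have : sumI (fun i => mi u i x) <= sumI (fun i => f i x / INR N) + sumI (fun i => bc i * norm2 (vsub x (u i))).
  rewrite /sumI -sumR_add; apply: sumR_le => i _; exact: mi_lower.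
lra.
Qed.

Lemma quad_ineq (gm m NN p r : R) : 0 < gm -> 0 < m -> 0 < NN ->
  (/ (2 * gm) - m / (2 * NN)) * ((p + r) * (p + r)) - / (2 * gm) * (p * p)
  <= (NN - gm * m) / (2 * (gm ^ 2 * m)) * (r * r).
Proof.
move=> h1 h2 h3.
have e : (NN - gm * m) / (2 * (gm ^ 2 * m)) * (r * r) -
  ((/ (2 * gm) - m / (2 * NN)) * ((p + r) * (p + r)) - / (2 * gm) * (p * p))
  = m / (2 * NN) * ((p - (NN - gm * m) / (gm * m) * r) * (p - (NN - gm * m) / (gm * m) * r)).
  field; lra.
have : 0 <= m / (2 * NN) * ((p - (NN - gm * m) / (gm * m) * r) * (p - (NN - gm * m) / (gm * m) * r)).
  have hm2 : 0 < m / (2 * NN) by apply: Rdiv_lt_0_compat; lra.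
  apply: Rmult_le_pos; [lra | exact: Rle_0_sqr].
lra.
Qed.

Definition phistar := phiR f g xstar.

Lemma xstar_dom : exists gs, g xstar = Some gs.
Proof.
have [ms [hm _]] := Hxstar.
move: hm; rewrite /phi; case: (g xstar) => [r|] // _; by exists r.
Qed.

Lemma phistar_le x v : phi f g x = Some v -> phistar <= v.
Proof.
have [ms [hm hmin]] := Hxstar.
move=> hx; have := hmin _ _ hx; by rewrite /phistar /phiR hm.
Qed.

Lemma phistar_le' x gx : g x = Some gx -> phistar <= phiR f g x.
Proof.
move=> hx; apply: (phistar_le (x := x)); by rewrite /phiR /phi hx.
Qed.

Lemma V_gap u : V u - phistar <= sumI (fun i => betac i * norm2 (vsub (zz u) (u i))).
Proof.
have [gs hs] := xstar_dom.
have h1 := V_growth u hs.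
have h2 := M_lower u hs.
rewrite -/phistar in h2.
suff : sumI (fun i => bc i * norm2 (vsub xstar (u i))) - / (2 * gamhat gam) * norm2 (vsub xstar (zz u))
       <= sumI (fun i => betac i * norm2 (vsub (zz u) (u i))) by lra.
have -> : / (2 * gamhat gam) = sumI (fun i => / (2 * gam i)).
  rewrite gamhat_W /W /sumI.
  rewrite (_ : / (2 * / \big[Rplus/0]_(i < N) / gam i) = / 2 * \big[Rplus/0]_(i < N) / gam i); last first.
    have := W_pos; rewrite /W /sumI => hw; field; lra.
  rewrite -sumR_scal; apply: eq_bigr => i _; have := gam_pos i => hg; field; lra.
rewrite /sumI -sumR_scal_r -sumR_sub; apply: sumR_le => i _.
rewrite /norm2 /inner -!sumR_scal -sumR_sub; apply: sumR_le => j _.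
rewrite /vsub /bc /betac.
have := quad_ineq (xstar j - zz u j) (zz u j - u i j) (gam_pos i) (Hmu_pos i) NR_pos.
rewrite /NR.
have -> : xstar j - zz u j + (zz u j - u i j) = xstar j - u i j by ring.
lra.
Qed.


Lemma V_step u I :
  V (ustep u I) + / (2 * gamhat gam) * norm2 (vsub (zz u) (zz (ustep u I)))
  <= V u - \big[Rplus/0]_(i < N | i \in I) (ac i * norm2 (vsub (zz u) (u i))).
Proof.
have [gz hz] := zz_dom u.
have h1 := V_growth (ustep u I) hz.
suff : Mval (ustep u I) (zz u) <= V u - \big[Rplus/0]_(i < N | i \in I) (ac i * norm2 (vsub (zz u) (u i))) by lra.
rewrite /V /Mval hz.
have -> : sumI (fun i => mi (ustep u I) i (zz u)) =
          sumI (fun i => mi u i (zz u)) -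
          \big[Rplus/0]_(i < N | i \in I) (mi u i (zz u) - f i (zz u) / INR N).
  rewrite /sumI (sumR_mkcond (fun i => i \in I)) -sumR_sub; apply: eq_bigr => i _.
  rewrite /ustep; case: (boolP (i \in I)) => hi.
  - have -> : mi (fun i0 => if i0 \in I then zz u else u i0) i (zz u) = f i (zz u) / INR N.
      have := mi_self (fun i0 => if i0 \in I then zz u else u i0) i.
      by rewrite hi.
    ring.
  - have -> : mi (fun i0 => if i0 \in I then zz u else u i0) i (zz u) = mi u i (zz u).
      by rewrite /mi (negbTE hi).
    ring.
have : \big[Rplus/0]_(i < N | i \in I) (ac i * norm2 (vsub (zz u) (u i))) <=
       \big[Rplus/0]_(i < N | i \in I) (mi u i (zz u) - f i (zz u) / INR N).
  apply: sumR_le => i _; have := mi_upper u i (zz u); lra.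
lra.
Qed.

Lemma V_init : V (fun _ => xinit) <= phiR f g xinit.
Proof.
have h1 := V_growth (fun _ => xinit) Hxinit.
have h2 := norm2_ge0 (vsub xinit (zz (fun _ => xinit))).
have hg : 0 < / (2 * gamhat gam).
  rewrite gamhat_W; apply: Rinv_0_lt_compat; have := W_pos => hw.
  have : 0 < / W by apply: Rinv_0_lt_compat.
  lra.
have : Mval (fun _ => xinit) xinit = phiR f g xinit.
  rewrite /Mval Hxinit (phiR_dom Hxinit) sum_fdiv Rplus_comm; congr Rplus.
  rewrite /sumI; apply: eq_bigr => i _; exact: (mi_self (fun _ => xinit) i).
nra.
Qed.

Lemma phi_le_V u : phiR f g (zz u) <= V u.
Proof.
have [gz hz] := zz_dom u.
have h := M_upper u hz.
have : 0 <= sumI (fun i => ac i * norm2 (vsub (zz u) (u i))).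
  apply: sumR_ge0 => i _; apply: Rmult_le_pos; [apply: Rlt_le; exact: ac_pos | exact: norm2_ge0].
rewrite /V; lra.
Qed.

Lemma V_ge u : phistar <= V u.
Proof.
have [gz hz] := zz_dom u.
have := phistar_le' hz; have := phi_le_V u; lra.
Qed.

Definition summu := sumI mu.

Lemma summu_pos : 0 < summu.
Proof.
rewrite /summu /sumI; apply: (Rlt_le_trans _ (mu i0)); first exact: Hmu_pos.
apply: sumR_ge_term => i; apply: Rlt_le; exact: Hmu_pos.
Qed.

Lemma phi_sc x gx : g x = Some gx ->
  summu / (2 * INR N) * norm2 (vsub x xstar) <= phiR f g x - phistar.
Proof.
move=> hx.
have [gs hs] := xstar_dom.
have hN := NR_pos; rewrite /NR in hN.
have hsm := summu_pos.
have hn := norm2_ge0 (vsub x xstar).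
set K := summu / (2 * INR N) * norm2 (vsub x xstar).
have hK : 0 <= K by rewrite /K; apply: Rmult_le_pos => //; apply: Rlt_le; apply: Rdiv_lt_0_compat; lra.
suff : K - (phiR f g x - phistar) <= 0 by lra.
apply: (lim_le (C := K) Rlt_0_1) => s [hs1 hs2].
have [c [hc hcle]] := Hg_convex (conj (Rlt_le _ _ hs1) (Rlt_le _ _ hs2)) hx hs.
have hst := phistar_le' hc.
rewrite (phiR_dom hc) (phiR_dom hx) in hst *.
rewrite /phistar (phiR_dom hs) -/phistar.
have hsum : sumI (fun i => f i (vadd (vscale s x) (vscale (1 - s) xstar))) <=
   s * sumI (fun i => f i x) + (1 - s) * sumI (fun i => f i xstar)
   - / 2 * s * (1 - s) * norm2 (vsub x xstar) * summu.
  have hsc := fun i => Hsc i x xstar (conj (Rlt_le _ _ hs1) (Rlt_le _ _ hs2)).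
  move: (norm2 (vsub x xstar)) hsc => n2 hsc.
  rewrite /summu /sumI.
  have -> : s * \big[Rplus/0]_(i < N) f i x + (1 - s) * \big[Rplus/0]_(i < N) f i xstar
     - / 2 * s * (1 - s) * n2 * \big[Rplus/0]_(i < N) mu i
     = \big[Rplus/0]_(i < N) (s * f i x + (1 - s) * f i xstar - / 2 * s * (1 - s) * n2 * mu i).
    by rewrite sumR_sub sumR_add !sumR_scal.
  apply: sumR_le => i _.
  have := hsc i; rewrite /Rdiv; lra.
rewrite /phistar (phiR_dom hs) in hst.
have hinvN : 0 < / INR N by apply: Rinv_0_lt_compat.
have : / INR N * sumI (fun i => f i (vadd (vscale s x) (vscale (1 - s) xstar))) <=
       / INR N * (s * sumI (fun i => f i x) + (1 - s) * sumI (fun i => f i xstar)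
   - / 2 * s * (1 - s) * norm2 (vsub x xstar) * summu).
  apply: Rmult_le_compat_l => //; lra.
have eK : / INR N * (/ 2 * s * (1 - s) * norm2 (vsub x xstar) * summu) = s * (1 - s) * K.
  rewrite /K; field; lra.
move=> h.
suff : s * K - s * (/ INR N * sumI (fun i => f i x) + gx - (/ INR N * sumI (fun i => f i xstar) + gs)) <= s * (s * K).
  move=> h'; apply: (Rmult_le_reg_l s) => //; lra.
nra.
Qed.


Lemma mu_le_L (hn : (0 < n)%nat) i : mu i <= L i.
Proof.
pose x0 : vec n := fun _ => 0.
pose y1 : vec n := fun _ => 1.
have h1 := descent (Hgrad i) (HL i) x0 y1.
have h2 := sc_lower (Hgrad i) (Hsc i) x0 y1.
have hpos : 1 <= norm2 (vsub y1 x0).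
  rewrite /norm2 /inner.
  have := @sumR_ge_term _ (fun j => vsub y1 x0 j * vsub y1 x0 j) (Ordinal hn) (fun j => ltac:(apply: Rle_0_sqr)).
  rewrite /vsub /y1 /x0 /=; lra.
nra.
Qed.

Lemma betac_pos (hn : (0 < n)%nat) i : 0 < betac i.
Proof.
have := ac_pos i; have := mu_le_L hn i; have := Hmu_pos i; have := gam_pos i.
have hN := NR_pos; rewrite /NR in hN.
rewrite /ac /betac => hg hm hml ha.
have : gam i * mu i < INR N.
  have : / (2 * gam i) - L i / (2 * INR N) = (INR N - gam i * L i) / (2 * gam i * INR N) by field; lra.
  move=> e; rewrite e in ha.
  have : 0 < INR N - gam i * L i.
    have e' : INR N - gam i * L i = (INR N - gam i * L i) / (2 * gam i * INR N) * (2 * gam i * INR N) by field; lra.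
    rewrite e'; apply: Rmult_lt_0_compat => //; nra.
  nra.
move=> h; have := pow_lt _ 2 hg => hg2.
apply: Rdiv_lt_0_compat; first lra.
apply: Rmult_lt_0_compat; [lra | exact: Rmult_lt_0_compat].
Qed.

Lemma ac_le_betac (hn : (0 < n)%nat) i : ac i <= betac i.
Proof.
have := ac_pos i; have := mu_le_L hn i; have := Hmu_pos i; have := gam_pos i.
have hN := NR_pos; rewrite /NR in hN.
rewrite /ac /betac => hg hm hml ha.
have e : / (2 * gam i) - L i / (2 * INR N) = (INR N - gam i * L i) / (2 * gam i * INR N) by field; lra.
rewrite e in ha *.
have hpos : 0 < INR N - gam i * L i.
  have e' : INR N - gam i * L i = (INR N - gam i * L i) / (2 * gam i * INR N) * (2 * gam i * INR N) by field; lra.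
  rewrite e'; apply: Rmult_lt_0_compat => //; nra.
have e2 : (INR N - gam i * mu i) / (2 * (gam i ^ 2 * mu i)) - (INR N - gam i * L i) / (2 * gam i * INR N)
  = ((INR N - gam i * mu i) * INR N - (INR N - gam i * L i) * gam i * mu i) / (2 * gam i ^ 2 * mu i * INR N).
  field; lra.
have : 0 <= ((INR N - gam i * mu i) * INR N - (INR N - gam i * L i) * gam i * mu i) / (2 * gam i ^ 2 * mu i * INR N).
  have hg2 := pow_lt _ 2 hg.
  apply: Rmult_le_pos; last first.
    apply: Rlt_le; apply: Rinv_0_lt_compat.
    apply: Rmult_lt_0_compat => //; apply: Rmult_lt_0_compat => //; apply: Rmult_lt_0_compat => //; lra.
  have : gam i * mu i <= gam i * L i by nra.
  nra.
lra.
Qed.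

Section Expect.
Variable q : seq {set 'I_N} -> {set 'I_N} -> R.
Hypothesis Hq : sampling_kernel q.

Lemma expect_mono k h F G : (forall h', F h' <= G h') -> expect q k h F <= expect q k h G.
Proof.
move=> H; elim: k h => [|k IH] h /=; first exact: H.
apply: sumR_le => S _; apply: Rmult_le_compat_l; [exact: (proj1 Hq) | exact: IH].
Qed.

Lemma expect_scal k h c F : expect q k h (fun h' => c * F h') = c * expect q k h F.
Proof.
elim: k h => [|k IH] h /=; first by [].
rewrite -sumR_scal; apply: eq_bigr => S _; rewrite IH; ring.
Qed.

Lemma expect_tower k h F :
  expect q k.+1 h F = expect q k h (fun h' => \big[Rplus/0]_(S : {set 'I_N}) (q h' S * F (rcons h' S))).
Proof.
elim: k h => [|k IH] h; first by [].
rewrite /=; apply: eq_bigr => S _; by rewrite -IH.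
Qed.

Lemma exchange_sets (w : 'I_N -> R) h :
  \big[Rplus/0]_(S : {set 'I_N}) (q h S * \big[Rplus/0]_(i < N | i \in S) w i) =
  \big[Rplus/0]_(i < N) (w i * \big[Rplus/0]_(S : {set 'I_N} | i \in S) q h S).
Proof.
have -> : \big[Rplus/0]_(S : {set 'I_N}) (q h S * \big[Rplus/0]_(i < N | i \in S) w i) =
          \big[Rplus/0]_(S : {set 'I_N}) \big[Rplus/0]_(i < N) (if i \in S then q h S * w i else 0).
  apply: eq_bigr => S _; rewrite (sumR_mkcond (fun i => i \in S)) -sumR_scal.
  apply: eq_bigr => i _; case: (i \in S); ring.
rewrite sumR_exchange; apply: eq_bigr => i _.
rewrite (sumR_mkcond (fun S : {set 'I_N} => i \in S)) -sumR_scal.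
apply: eq_bigr => S _; case: (i \in S); ring.
Qed.

Variable p : 'I_N -> R.
Hypothesis Hp : forall i, 0 < p i.
Hypothesis Hlb : sampling_lower_bound q p.

Lemma p_le1 i : p i <= 1.
Proof.
have := Hlb [::] i.
have : \big[Rplus/0]_(S : {set 'I_N} | i \in S) q [::] S <= \big[Rplus/0]_(S : {set 'I_N}) q [::] S.
  rewrite (sumR_mkcond (fun S : {set 'I_N} => i \in S)); apply: sumR_le => S _.
  case: (i \in S); [lra | exact: (proj1 Hq)].
rewrite (proj2 Hq); lra.
Qed.

Definition Yh h := V (uh h) - phistar.

Variable r : R.
Hypothesis Hr0 : 0 <= r.
Hypothesis Hrb : forall i, r * betac i <= ac i * p i.
Hypothesis Hn : (0 < n)%nat.

Lemma r_le1 : r <= 1.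
Proof.
have := Hrb i0; have := betac_pos Hn i0; have := ac_le_betac Hn i0; have := p_le1 i0; have := Hp i0; have := ac_pos i0.
nra.
Qed.

Lemma one_step h :
  \big[Rplus/0]_(S : {set 'I_N}) (q h S * Yh (rcons h S)) <= (1 - r) * Yh h.
Proof.
set u := uh h.
set w := fun i => ac i * norm2 (vsub (zz u) (u i)).
have hstep : forall S, Yh (rcons h S) <= Yh h - \big[Rplus/0]_(i < N | i \in S) w i.
  move=> S; rewrite /Yh uh_rcons -/u.
  have := V_step u S.
  have : 0 <= / (2 * gamhat gam) * norm2 (vsub (zz u) (zz (ustep u S))).
    apply: Rmult_le_pos; last exact: norm2_ge0.
    rewrite gamhat_W; apply: Rlt_le; apply: Rinv_0_lt_compat; have := W_pos => hw.
    have : 0 < / W by apply: Rinv_0_lt_compat.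
    lra.
  rewrite /w; lra.
have h1 : \big[Rplus/0]_(S : {set 'I_N}) (q h S * Yh (rcons h S)) <=
          \big[Rplus/0]_(S : {set 'I_N}) (q h S * (Yh h - \big[Rplus/0]_(i < N | i \in S) w i)).
  apply: sumR_le => S _; apply: Rmult_le_compat_l; [exact: (proj1 Hq) | exact: hstep].
have h2 : \big[Rplus/0]_(S : {set 'I_N}) (q h S * (Yh h - \big[Rplus/0]_(i < N | i \in S) w i)) =
          Yh h - \big[Rplus/0]_(i < N) (w i * \big[Rplus/0]_(S : {set 'I_N} | i \in S) q h S).
  rewrite -exchange_sets.
  rewrite (_ : \big[Rplus/0]_(S : {set 'I_N}) (q h S * (Yh h - \big[Rplus/0]_(i < N | i \in S) w i))
     = \big[Rplus/0]_(S : {set 'I_N}) (q h S * Yh h) - \big[Rplus/0]_(S : {set 'I_N}) (q h S * \big[Rplus/0]_(i < N | i \in S) w i)); last first.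
    by rewrite -sumR_sub; apply: eq_bigr => S _; ring.
  by rewrite sumR_scal_r (proj2 Hq) Rmult_1_l.
have h3 : r * Yh h <= \big[Rplus/0]_(i < N) (w i * \big[Rplus/0]_(S : {set 'I_N} | i \in S) q h S).
  have hg := V_gap u.
  rewrite /Yh -/u.
  apply: (Rle_trans _ (r * sumI (fun i => betac i * norm2 (vsub (zz u) (u i))))).
    exact: Rmult_le_compat_l.
  rewrite /sumI -sumR_scal; apply: sumR_le => i _.
  rewrite /w.
  have hn2 := norm2_ge0 (vsub (zz u) (u i)).
  have := Hlb h i; have := Hrb i; have := ac_pos i.
  move: (\big[Rplus/0]_(S : {set 'I_N} | i \in S) q h S) => Q ha hrb hpq.
  have : ac i * p i <= ac i * Q by apply: Rmult_le_compat_l; lra.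
  move=> hh.
  have : 0 <= (ac i * Q - r * betac i) * norm2 (vsub (zz u) (u i)) by apply: Rmult_le_pos; lra.
  nra.
lra.
Qed.

Lemma expect_Y k : expect q k [::] Yh <= (1 - r) ^ k * Yh [::].
Proof.
have hr1 := r_le1.
elim: k => [|k IH]; first by rewrite /= Rmult_1_l; lra.
rewrite expect_tower.
apply: (Rle_trans _ (expect q k [::] (fun h' => (1 - r) * Yh h'))).
  apply: expect_mono => h'; exact: one_step.
rewrite expect_scal /=.
rewrite Rmult_assoc; apply: Rmult_le_compat_l; [lra | exact IH].
Qed.

Definition D0 := phiR f g xinit - phistar.

Lemma partA_core k :
  expect q k [::] (fun h => phiR f g (finito_z gam df prox xinit h) - phistar) <= D0 * (1 - r) ^ k /\
  / 2 * expect q k [::] (fun h => norm2 (vsub (finito_z gam df prox xinit h) xstar))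
     <= INR N * D0 / summu * (1 - r) ^ k.
Proof.
have hr1 := r_le1.
have hY0 : Yh [::] <= D0.
  rewrite /Yh uh_nil /D0; have := V_init; lra.
have hpow : 0 <= (1 - r) ^ k by apply: pow_le; lra.
have hE1 : expect q k [::] (fun h => phiR f g (finito_z gam df prox xinit h) - phistar) <= D0 * (1 - r) ^ k.
  apply: (Rle_trans _ (expect q k [::] Yh)).
    apply: expect_mono => h; rewrite zk_uh /Yh; have := phi_le_V (uh h); lra.
  apply: (Rle_trans _ _ _ (expect_Y k)); rewrite Rmult_comm; exact: Rmult_le_compat_r.
split => //.
have hsm := summu_pos.
have hN := NR_pos; rewrite /NR in hN.
have : expect q k [::] (fun h => norm2 (vsub (finito_z gam df prox xinit h) xstar)) <=
       expect q k [::] (fun h => (2 * INR N / summu) * (phiR f g (finito_z gam df prox xinit h) - phistar)).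
  apply: expect_mono => h.
  have [gz hz] := zz_dom (uh h).
  have := phi_sc hz; rewrite zk_uh.
  move: (norm2 (vsub (zz (uh h)) xstar)) (phiR f g (zz (uh h)) - phistar) => a b hab.
  have e : 2 * INR N / summu * b = b / (summu / (2 * INR N)) by field; lra.
  rewrite e.
  apply: Rmult_le_reg_r (summu / (2 * INR N)) _ _ _ _; first by apply: Rdiv_lt_0_compat; lra.
  rewrite /Rdiv Rmult_assoc Rinv_l; last by apply: Rgt_not_eq; apply: Rdiv_lt_0_compat; lra.
  rewrite -/(Rdiv summu (2 * INR N)); lra.
rewrite expect_scal => h.
have : / 2 * (2 * INR N / summu) = INR N / summu by field; lra.
move=> e.
have hc : 0 <= INR N / summu by apply: Rlt_le; apply: Rdiv_lt_0_compat.
apply: (Rle_trans _ (/ 2 * (2 * INR N / summu * (D0 * (1 - r) ^ k)))).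
  apply: Rmult_le_compat_l; first lra.
  apply: (Rle_trans _ _ _ h); apply: Rmult_le_compat_l => //.
  apply: Rlt_le; apply: Rdiv_lt_0_compat; lra.
rewrite -Rmult_assoc e /Rdiv; lra.
Qed.

End Expect.


Lemma norm2_add_le (a b : vec n) t : 0 < t ->
  norm2 (vadd a b) <= (1 + t) * norm2 a + (1 + / t) * norm2 b.
Proof.
move=> ht; rewrite /norm2 /inner; sumfold2; apply: sumR_le => j _.
rewrite /vadd.
have : 0 <= (t * a j - b j) * (t * a j - b j) / t.
  apply: Rmult_le_pos; [exact: Rle_0_sqr | apply: Rlt_le; exact: Rinv_0_lt_compat].
have -> : (t * a j - b j) * (t * a j - b j) / t = t * (a j * a j) - 2 * (a j * b j) + / t * (b j * b j).
  by field; lra.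
nra.
Qed.

Lemma norm2_vsub_sym (a b : vec n) : norm2 (vsub a b) = norm2 (vsub b a).
Proof. rewrite /norm2 /inner; apply: eq_bigr => j _; rewrite /vsub; ring. Qed.

Section Epoch.
Variable u0 : 'I_N -> vec n.
Variable s : seq {set 'I_N}.

Definition traj m := foldl ustep u0 (take m s).
Definition zs m := zz (traj m).
Definition ee m := norm2 (vsub (zs m) (zs m.+1)).
Definition SS m := \big[Rplus/0]_(l < m) ee l.

Lemma traj_succ m : (m < size s)%nat -> traj m.+1 = ustep (traj m) (nth set0 s m).
Proof. by move=> hm; rewrite /traj (take_nth set0 hm) foldl_rcons. Qed.

Lemma ee_ge0 m : 0 <= ee m. Proof. exact: norm2_ge0. Qed.

Lemma SS_succ m : SS m.+1 = SS m + ee m.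
Proof. by rewrite /SS big_ord_recr. Qed.

Lemma SS_ge0 m : 0 <= SS m.
Proof. apply: sumR_ge0 => l _; exact: ee_ge0. Qed.

Lemma zs_dist j d : norm2 (vsub (zs (j + d)) (zs j)) <= INR d * SS (j + d).
Proof.
elim: d => [|d IH].
  rewrite addn0 vsub_self norm2_zero /=; lra.
rewrite addnS SS_succ.
have e : vsub (zs (j + d).+1) (zs j) = vadd (vsub (zs (j + d)) (zs j)) (vsub (zs (j + d).+1) (zs (j + d))).
  apply: functional_extensionality => k; rewrite /vsub /vadd; ring.
rewrite e.
case: d IH e => [|d] IH e.
  rewrite !addn0 vsub_self.
  have -> : vadd (fun _ : 'I_n => 0) (vsub (zs j.+1) (zs j)) = vsub (zs j.+1) (zs j).
    apply: functional_extensionality => k; rewrite /vadd; ring.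
  have hee : norm2 (vsub (zs j.+1) (zs j)) = ee j by rewrite /ee norm2_vsub_sym.
  have hS := SS_ge0 j.
  rewrite hee /=; lra.
have hS := SS_ge0 (j + d.+1); have he := ee_ge0 (j + d.+1).
have hee : norm2 (vsub (zs (j + d.+1).+1) (zs (j + d.+1))) = ee (j + d.+1) by rewrite /ee norm2_vsub_sym.
have hd : 0 < INR d.+1 by apply: lt_0_INR; lia.
have := norm2_add_le (vsub (zs (j + d.+1)) (zs j)) (vsub (zs (j + d.+1).+1) (zs (j + d.+1))) (Rinv_0_lt_compat _ hd).
rewrite Rinv_inv hee.
move=> h.
apply: (Rle_trans _ _ _ h).
have e2 : (1 + / INR d.+1) * (INR d.+1 * SS (j + d.+1)) = (INR d.+1 + 1) * SS (j + d.+1) by field; lra.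
have : (1 + / INR d.+1) * norm2 (vsub (zs (j + d.+1)) (zs j)) <= (1 + / INR d.+1) * (INR d.+1 * SS (j + d.+1)).
  apply: Rmult_le_compat_l => //.
  have : 0 < / INR d.+1 by apply: Rinv_0_lt_compat.
  lra.
rewrite e2 !S_INR => ?; nra.
Qed.

Lemma zs_dist' j m : (j <= m)%nat -> norm2 (vsub (zs m) (zs j)) <= INR m * SS m.
Proof.
move=> hjm.
have := zs_dist j (m - j).
rewrite subnKC //.
move=> h; apply: (Rle_trans _ _ _ h); apply: Rmult_le_compat_r; first exact: SS_ge0.
apply: le_INR; apply/leP; exact: leq_subr.
Qed.

Lemma telescope m : (m <= size s)%nat -> / (2 * gamhat gam) * SS m <= V (traj 0) - V (traj m).
Proof.
elim: m => [|m IH] hm.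
  rewrite /SS big_ord0; lra.
have hm' : (m < size s)%nat by exact: hm.
have := IH (ltnW hm').
rewrite SS_succ traj_succ //.
have := V_step (traj m) (nth set0 s m).
have : 0 <= \big[Rplus/0]_(i < N | i \in nth set0 s m) (ac i * norm2 (vsub (zz (traj m)) (traj m i))).
  apply: sumR_ge0 => i _; apply: Rmult_le_pos; [apply: Rlt_le; exact: ac_pos | exact: norm2_ge0].
have -> : ee m = norm2 (vsub (zz (traj m)) (zz (ustep (traj m) (nth set0 s m)))).
  by rewrite /ee /zs traj_succ.
lra.
Qed.

Lemma traj_cover m (i : 'I_N) : (m <= size s)%nat -> has (fun S : {set 'I_N} => i \in S) (take m s) ->
  exists2 j, (j < m)%nat & traj m i = zs j.
Proof.
elim: m => [|m IH] hm; first by rewrite take0.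
have hm' : (m < size s)%nat by exact: hm.
rewrite (take_nth set0 hm') has_rcons => /orP [hi | hi].
  exists m => //; by rewrite traj_succ // /ustep hi.
have [j hj e] := IH (ltnW hm') hi.
case: (boolP (i \in nth set0 s m)) => hi'.
  exists m => //; by rewrite traj_succ // /ustep hi'.
exists j; first by apply: ltnW.
by rewrite traj_succ // /ustep (negbTE hi') e.
Qed.

Hypothesis Hn : (0 < n)%nat.
Hypothesis Hcov : forall i : 'I_N, has (fun S : {set 'I_N} => i \in S) s.

Lemma epoch_bound :
  V (traj (size s)) - phistar <=
  INR (size s) * sumI betac * (2 * gamhat gam) * (V (traj 0) - V (traj (size s))).
Proof.
have hg := V_gap (traj (size s)).
have ht := telescope (leqnn (size s)).
have hW := W_pos.
have hgh : 0 < gamhat gam by rewrite gamhat_W; apply: Rinv_0_lt_compat.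
have hSS : SS (size s) <= 2 * gamhat gam * (V (traj 0) - V (traj (size s))).
  have e : SS (size s) = 2 * gamhat gam * (/ (2 * gamhat gam) * SS (size s)) by field; lra.
  rewrite e; apply: Rmult_le_compat_l => //; lra.
apply: (Rle_trans _ _ _ hg).
have : sumI (fun i => betac i * norm2 (vsub (zz (traj (size s))) (traj (size s) i))) <=
       sumI (fun i => betac i * (INR (size s) * SS (size s))).
  apply: sumR_le => i _.
  have hc := Hcov i; rewrite -(take_size s) in hc.
  have [j hj e] := traj_cover (leqnn _) hc.
  rewrite e -/(zs (size s)).
  apply: Rmult_le_compat_l; first exact: Rlt_le (betac_pos Hn i).
  apply: zs_dist'; exact: ltnW.
have -> : sumI (fun i => betac i * (INR (size s) * SS (size s))) = sumI betac * (INR (size s) * SS (size s)).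
  by rewrite /sumI sumR_scal_r.
have hb : 0 <= sumI betac by apply: sumR_ge0 => i _; exact: Rlt_le (betac_pos Hn i).
have hM := pos_INR (size s).
have : sumI betac * (INR (size s) * SS (size s)) <= sumI betac * (INR (size s) * (2 * gamhat gam * (V (traj 0) - V (traj (size s))))).
  apply: Rmult_le_compat_l => //; exact: Rmult_le_compat_l.
lra.
Qed.
End Epoch.

Lemma hist_succ (pi : nat -> {perm 'I_N}) nu :
  shuffled_hist pi (nu.+1 * N) = shuffled_hist pi (nu * N) ++ [seq shuffled_set pi j | j <- iota (nu * N) N].
Proof. by rewrite /shuffled_hist mulSnr iotaD map_cat add0n. Qed.

Lemma hist_cover (pi : nat -> {perm 'I_N}) nu (i : 'I_N) :
  has (fun S : {set 'I_N} => i \in S) [seq shuffled_set pi j | j <- iota (nu * N) N].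
Proof.
apply/hasP.
set j := ((pi nu)^-1)%g i.
exists (shuffled_set pi (nu * N + j)).
  apply: map_f; rewrite mem_iota; apply/andP; split; first exact: leq_addr.
  by rewrite ltn_add2l ltn_ord.
rewrite /shuffled_set.
have -> : ((nu * N + j) %/ N)%nat = nu.
  by rewrite divnMDl // divn_small ?addn0 ?ltn_ord.
have -> : ((nu * N + j) %% N)%nat = j.
  by rewrite modnMDl modn_small ?ltn_ord.
have -> : i = pi nu j by rewrite /j permKV.
apply: imset_f; by rewrite inE.
Qed.

Lemma sumbeta_bound (Hn : (0 < n)%nat) :
  let delta := minI (fun i => gam i * mu i / INR N) in
  2 * gamhat gam * sumI betac <= (1 - delta) / delta.
Proof.
move=> delta.
have hN := NR_pos; rewrite /NR in hN.
have hdpos : 0 < delta.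
  rewrite /delta; have [j ->] := minI_mem (fun i => gam i * mu i / INR N) i0.
  apply: Rdiv_lt_0_compat => //; exact: Rmult_lt_0_compat (gam_pos j) (Hmu_pos j).
have hb : forall i, betac i <= / (2 * gam i) * ((1 - delta) / delta).
  move=> i.
  have hdi : delta <= gam i * mu i / INR N by apply: minI_le.
  have hg := gam_pos i; have hm := Hmu_pos i.
  rewrite /betac.
  have -> : (INR N - gam i * mu i) / (2 * (gam i ^ 2 * mu i)) = / (2 * gam i) * (/ (gam i * mu i / INR N) - 1).
    by field; repeat split; lra.
  apply: Rmult_le_compat_l; first by apply: Rlt_le; apply: Rinv_0_lt_compat; lra.
  have -> : (1 - delta) / delta = / delta - 1 by field; lra.
  have : / (gam i * mu i / INR N) <= / delta.
    apply: Rinv_le_contravar => //.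
  lra.
have hW := W_pos.
rewrite gamhat_W.
have : sumI betac <= sumI (fun i => / (2 * gam i) * ((1 - delta) / delta)).
  by apply: sumR_le => i _; exact: hb.
have -> : sumI (fun i => / (2 * gam i) * ((1 - delta) / delta)) = W / 2 * ((1 - delta) / delta).
  rewrite /sumI sumR_scal_r; congr Rmult.
  rewrite /W /sumI /Rdiv -sumR_scal_r; apply: eq_bigr => i _; have := gam_pos i => hg; field; lra.
move=> h.
have hiW : 0 < 2 * / W by have := Rinv_0_lt_compat _ hW; lra.
apply: (Rle_trans _ (2 * / W * (W / 2 * ((1 - delta) / delta)))).
  exact: Rmult_le_compat_l (Rlt_le _ _ hiW) h.
apply: Req_le; field; lra.
Qed.

Lemma epoch_step (Hn : (0 < n)%nat) (pi : nat -> {perm 'I_N}) nu :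
  let delta := minI (fun i => gam i * mu i / INR N) in
  let Delta := maxI (fun i => gam i * L i / INR N) in
  let c := delta * (1 - Delta) / (INR N * (2 - delta) ^ 2 * (1 - delta)) in
  0 <= c /\ c <= 1 /\
  V (uh (shuffled_hist pi (nu.+1 * N))) - phistar <= (1 - c) * (V (uh (shuffled_hist pi (nu * N))) - phistar).
Proof.
move=> delta Delta c.
have hN := NR_pos; rewrite /NR in hN.
have hN1 : 1 <= INR N by apply: (le_INR 1); apply/leP.
set s := [seq shuffled_set pi j | j <- iota (nu * N) N].
set u0 := uh (shuffled_hist pi (nu * N)).
have hu : uh (shuffled_hist pi (nu.+1 * N)) = traj u0 s (size s).
  by rewrite hist_succ uh_cat /traj take_size.
have hu0 : traj u0 s 0 = u0 by rewrite /traj take0.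
have hs : size s = N by rewrite size_map size_iota.
have heb := epoch_bound (s := s) u0 Hn (hist_cover pi nu).
have htel := telescope u0 (leqnn (size s)).
have hSS := SS_ge0 u0 s (size s).
rewrite hu0 hs in heb htel. rewrite hs in hSS.
rewrite hu hs.
have hgh : 0 < / (2 * gamhat gam).
  rewrite gamhat_W; apply: Rinv_0_lt_compat; have := Rinv_0_lt_compat _ W_pos; lra.
set Y := V u0 - phistar.
set Y' := V (traj u0 s N) - phistar.
have hY : 0 <= Y' by have := V_ge (traj u0 s N); rewrite /Y'; lra.
have hYY : 0 <= Y - Y' by rewrite /Y /Y'; nra.
have hsb := sumbeta_bound Hn; rewrite -/delta in hsb.
have hdpos : 0 < delta.
  rewrite /delta; have [j ->] := minI_mem (fun i => gam i * mu i / INR N) i0.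
  apply: Rdiv_lt_0_compat => //; exact: Rmult_lt_0_compat (gam_pos j) (Hmu_pos j).
have hdD : delta <= Delta.
  apply: (Rle_trans _ (gam i0 * mu i0 / INR N)); first exact: minI_le.
  apply: (Rle_trans _ (gam i0 * L i0 / INR N)); last exact: le_maxI.
  apply: Rmult_le_compat_r; first by apply: Rlt_le; apply: Rinv_0_lt_compat.
  apply: Rmult_le_compat_l; [exact: Rlt_le (gam_pos i0) | exact: mu_le_L].
have hD1 : Delta < 1.
  rewrite /Delta; have [j ->] := maxI_mem (fun i => gam i * L i / INR N) i0.
  have := ac_pos j; have := gam_pos j; rewrite /ac => hg ha.
  have e : / (2 * gam j) - L j / (2 * INR N) = (1 - gam j * L j / INR N) / (2 * gam j) by field; lra.
  rewrite e in ha.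
  have : 0 < 1 - gam j * L j / INR N.
    have e2 : 1 - gam j * L j / INR N = (1 - gam j * L j / INR N) / (2 * gam j) * (2 * gam j) by field; lra.
    rewrite e2; apply: Rmult_lt_0_compat => //; lra.
  lra.
have [hc0 hc1] := cb_bound hN1 hdpos hdD hD1.
rewrite -/c in hc0 hc1.
set K := INR N * (1 - delta) / delta.
have hK : 0 <= K by rewrite /K; apply: Rmult_le_pos; [apply: Rmult_le_pos; lra | apply: Rlt_le; apply: Rinv_0_lt_compat].
have hK' : Y' <= K * (Y - Y').
  apply: (Rle_trans _ _ _ heb).
  rewrite -/Y' /Y' /Y.
  have e : INR N * sumI betac * (2 * gamhat gam) = INR N * (2 * gamhat gam * sumI betac) by ring.
  rewrite e.
  have e2 : V u0 - phistar - (V (traj u0 s N) - phistar) = V u0 - V (traj u0 s N) by ring.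
  rewrite e2.
  have hVV : 0 <= V u0 - V (traj u0 s N) by rewrite /Y /Y' in hYY; lra.
  apply: Rmult_le_compat_r => //.
  apply: (Rle_trans _ (INR N * ((1 - delta) / delta))); first by apply: Rmult_le_compat_l; lra.
  rewrite /K; apply: Req_le; field; lra.
have hc1' : c <= 1.
  have : c * (1 + K) <= 1 by [].
  nra.
split => //; split => //.
rewrite -/Y -/Y'.
have hY0 : 0 <= Y by lra.
have h1 : c * (1 + K) * Y <= Y.
  have : c * (1 + K) <= 1 by [].
  nra.
have h2 : (1 + K) * Y' <= (1 + K) * ((1 - c) * Y) by nra.
apply: (Rmult_le_reg_l (1 + K)); lra.
Qed.

Lemma expect_zero (q : seq {set 'I_N} -> {set 'I_N} -> R) k h : expect q k h (fun _ => 0) = 0.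
Proof.
elim: k h => [|k IH] h //=.
rewrite big1 // => S _; rewrite IH; ring.
Qed.

Lemma c_props_A (Hn : (0 < n)%nat) (p : 'I_N -> R) (Hp : forall i, 0 < p i) :
  let xi := fun i => (INR N - gam i * L i) / INR N in
  let c := minI (fun i => xi i * p i / gam i)
           / maxI (fun i => (INR N - gam i * mu i) / (gam i ^ 2 * mu i)) in
  0 <= c /\ forall i, c * betac i <= ac i * p i.
Proof.
move=> xi c.
have hN := NR_pos; rewrite /NR in hN.
have e1 : (fun i => xi i * p i / gam i) = (fun i => 2 * ac i * p i).
  apply: functional_extensionality => i; rewrite /xi /ac; have := gam_pos i => hg; field; lra.
have e2 : (fun i => (INR N - gam i * mu i) / (gam i ^ 2 * mu i)) = (fun i => 2 * betac i).
  apply: functional_extensionality => i; rewrite /betac; have := gam_pos i => hg; have := Hmu_pos i => hm.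
  have := pow_lt _ 2 hg => hg2.
  field; lra.
rewrite /c e1 e2.
set m := minI (fun i => 2 * ac i * p i).
set M := maxI (fun i => 2 * betac i).
have hm : 0 < m.
  rewrite /m; have [j ->] := minI_mem (fun i => 2 * ac i * p i) i0.
  have := ac_pos j; have := Hp j; nra.
have hM : 0 < M.
  apply: (Rlt_le_trans _ (2 * betac i0)); last by apply: (le_maxI (fun i => 2 * betac i)).
  have := betac_pos Hn i0; lra.
split.
  apply: Rlt_le; exact: Rdiv_lt_0_compat.
move=> i.
have h1 : m <= 2 * ac i * p i by apply: (minI_le (fun i => 2 * ac i * p i)).
have h2 : 2 * betac i <= M by apply: (le_maxI (fun i => 2 * betac i)).
have hb := betac_pos Hn i.
have e : m / M * betac i = m * (betac i / M) by rewrite /Rdiv; ring.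
rewrite e.
have : betac i / M <= / 2.
  apply: (Rmult_le_reg_r M) => //.
  rewrite /Rdiv Rmult_assoc Rinv_l; lra.
nra.
Qed.

Lemma main :   let phistar := phiR f g xstar in
  let D0 := phiR f g xinit - phistar in
  let zk := finito_z gam df prox xinit in
  let summu := sumI mu in
  (forall (p : 'I_N -> R) (q : seq {set 'I_N} -> {set 'I_N} -> R),
     (forall i, 0 < p i) -> sampling_kernel q -> sampling_lower_bound q p ->
     let xi := fun i => (INR N - gam i * L i) / INR N in
     let c := minI (fun i => xi i * p i / gam i)
              / maxI (fun i => (INR N - gam i * mu i) / (gam i ^ 2 * mu i)) in
     (forall k : nat,
        expect q k [::] (fun h => phiR f g (zk h) - phistar) <= D0 * (1 - c) ^ k /\
        / 2 * expect q k [::] (fun h => norm2 (vsub (zk h) xstar))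
          <= INR N * D0 / summu * (1 - c) ^ k) /\
     (let kappa := fun i => L i / mu i in
      let w := fun i => (sqrt (kappa i) + sqrt (kappa i - 1)) ^ 2 in
      (forall i, 1 < kappa i) ->
      (forall i, gam i = INR N / mu i * (1 - sqrt (1 - / kappa i))) ->
      (forall i, p i = w i / sumI w) ->
      let c' := / sumI w in
      forall k : nat,
        expect q k [::] (fun h => phiR f g (zk h) - phistar) <= D0 * (1 - c') ^ k /\
        / 2 * expect q k [::] (fun h => norm2 (vsub (zk h) xstar))
          <= INR N * D0 / summu * (1 - c') ^ k)) /\
  (forall pi : nat -> {perm 'I_N},
     let delta := minI (fun i => gam i * mu i / INR N) in
     let Delta := maxI (fun i => gam i * L i / INR N) in
     let c := delta * (1 - Delta) / (INR N * (2 - delta) ^ 2 * (1 - delta)) in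
     forall nu : nat,
       phiR f g (zk (shuffled_hist pi (nu * N))) - phistar <= D0 * (1 - c) ^ nu /\
       / 2 * norm2 (vsub (zk (shuffled_hist pi (nu * N))) xstar)
         <= INR N * D0 / summu * (1 - c) ^ nu).
Proof.
move=> phistar' D0' zk summu'.
case: (posnP n) => [hn0 | hn].
  have hD0 : D0' = 0 by rewrite /D0' /phistar' (vec0_eq hn0 xinit xstar); ring.
  have hz : forall h, zk h = xstar by move=> h; exact: vec0_eq.
  have hnm : forall x : vec n, norm2 x = 0.
    move=> x; rewrite (vec0_eq hn0 x (fun _ => 0)); exact: norm2_zero.
  split.
    move=> p q hp hq hlb xi c.
    have hE : forall k, expect q k [::] (fun h => phiR f g (zk h) - phistar') <= 0 /\
                        / 2 * expect q k [::] (fun h => norm2 (vsub (zk h) xstar)) <= 0.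
      move=> k; split.
        rewrite -(expect_zero q k [::]); apply: (expect_mono hq) => h; rewrite hz /phistar'; lra.
      rewrite -(expect_zero q k [::]).
      have -> : expect q k [::] (fun h => norm2 (vsub (zk h) xstar)) = expect q k [::] (fun _ => 0).
        apply: Rle_antisym; apply: (expect_mono hq) => h; rewrite hnm; lra.
      rewrite expect_zero; lra.
    split.
      move=> k; have [h1 h2] := hE k; rewrite hD0; split; lra.
    move=> kappa w _ _ _ c' k; have [h1 h2] := hE k; rewrite hD0; split; lra.
  move=> pi delta Delta c nu.
  rewrite hz hnm hD0 /phistar'; split; [rewrite Rmult_0_l; lra | rewrite /Rdiv !Rmult_0_r !Rmult_0_l; lra].
split.
  move=> p q hp hq hlb xi c.
  have [hc0 hcb] := c_props_A hn hp.
  split.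
    move=> k; exact: (partA_core hq hp hlb hc0 hcb hn k).
  move=> kappa w hk hg hpw c' k.
  have hw : forall i, 0 < w i.
    move=> i; rewrite /w; apply: pow_lt.
    have : 0 < sqrt (kappa i) by apply: sqrt_lt_R0; have := hk i; lra.
    have := sqrt_pos (kappa i - 1); lra.
  have hW : 0 < sumI w.
    apply: (Rlt_le_trans _ (w i0)); first exact: hw.
    apply: sumR_ge_term => i; exact: Rlt_le (hw i).
  have hc0' : 0 <= c' by apply: Rlt_le; apply: Rinv_0_lt_compat.
  have hcb' : forall i, c' * betac i <= ac i * p i.
    move=> i.
    have ht : betac i <= ac i * w i.
      rewrite /betac /ac /w (hg i) /kappa.
      have := hk i; rewrite /kappa => hki.
      have hN := NR_pos; rewrite /NR in hN.
      exact: (tuned hN (Hmu_pos i) hki).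
    rewrite (hpw i) /c'.
    have -> : ac i * (w i / sumI w) = / sumI w * (ac i * w i) by rewrite /Rdiv; ring.
    apply: Rmult_le_compat_l => //.
  exact: (partA_core hq hp hlb hc0' hcb' hn k).
move=> pi delta Delta c.
have hstep := fun nu => epoch_step hn pi nu.
have hc : 0 <= c /\ c <= 1 by have [h1 [h2 _]] := hstep 0%nat.
have hY : forall nu, V (uh (shuffled_hist pi (nu * N))) - phistar <= (1 - c) ^ nu * (V (uh [::]) - phistar).
  elim => [|nu IH].
    rewrite mul0n; have -> : shuffled_hist pi 0 = [::] by []. simpl; lra.
  have [_ [_ h]] := hstep nu.
  apply: (Rle_trans _ _ _ h).
  change ((1 - c) * (V (uh (shuffled_hist pi (nu * N))) - phistar) <= (1 - c) ^ nu.+1 * (V (uh [::]) - phistar)).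
  rewrite /= Rmult_assoc; apply: Rmult_le_compat_l => //; lra.
move=> nu.
have hY0 : V (uh [::]) - phistar <= D0'.
  rewrite uh_nil /D0' /phistar'; have := V_init; rewrite /phistar; lra.
have hpow : 0 <= (1 - c) ^ nu by apply: pow_le; lra.
have h1 : phiR f g (zk (shuffled_hist pi (nu * N))) - phistar' <= D0' * (1 - c) ^ nu.
  rewrite /zk zk_uh.
  have := phi_le_V (uh (shuffled_hist pi (nu * N))); have := hY nu.
  have : (1 - c) ^ nu * (V (uh [::]) - phistar) <= (1 - c) ^ nu * D0' by apply: Rmult_le_compat_l.
  rewrite /phistar' /phistar; lra.
split => //.
have hsm := summu_pos.
have hN := NR_pos; rewrite /NR in hN.
have [gz hgz] := zz_dom (uh (shuffled_hist pi (nu * N))).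
have := phi_sc hgz.
rewrite /zk zk_uh in h1 *.
move: (norm2 (vsub (zz (uh (shuffled_hist pi (nu * N)))) xstar)) h1 => a h1 ha.
have hsm' : summu' = summu by [].
rewrite hsm'.
have : a <= 2 * INR N / summu * (phiR f g (zz (uh (shuffled_hist pi (nu * N)))) - phistar).
  have e : a = 2 * INR N / summu * (summu / (2 * INR N) * a) by field; lra.
  rewrite {1}e; apply: Rmult_le_compat_l => //.
  apply: Rlt_le; apply: Rdiv_lt_0_compat; lra.
move=> h2.
have hq : 0 <= 2 * INR N / summu by apply: Rlt_le; apply: Rdiv_lt_0_compat; lra.
have : 2 * INR N / summu * (phiR f g (zz (uh (shuffled_hist pi (nu * N)))) - phistar) <= 2 * INR N / summu * (D0' * (1 - c) ^ nu).
  apply: Rmult_le_compat_l => //.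
have e3 : / 2 * (2 * INR N / summu * (D0' * (1 - c) ^ nu)) = INR N * D0' / summu * (1 - c) ^ nu by field; lra.
lra.
Qed.

End Finito.

Unset Implicit Arguments.

Theorem corollary3p3
  (n N : nat) (HN : (0 < N)%nat)
  (f : 'I_N -> vec n -> R) (df : 'I_N -> vec n -> vec n)
  (L mu : 'I_N -> R)
  (Hgrad : forall i, is_gradient (f i) (df i))
  (HL : forall i, lipschitz_map (L i) (df i))
  (Hmu_pos : forall i, 0 < mu i)
  (Hsc : forall i, strongly_convex (mu i) (f i))
  (g : vec n -> option R)
  (Hg_proper : proper_fun g) (Hg_convex : convex_ext g) (Hg_lsc : lsc_ext g)
  (xstar : vec n) (Hxstar : is_minimizer f g xstar)
  (gam : 'I_N -> R) (Hgam : forall i, 0 < gam i < INR N / L i)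
  (prox : vec n -> vec n)
  (Hprox : forall u, is_prox (gamhat gam) g u (prox u))
  (xinit : vec n) (ginit : R) (Hxinit : g xinit = Some ginit) :
  let phistar := phiR f g xstar in
  let D0 := phiR f g xinit - phistar in
  let zk := finito_z gam df prox xinit in
  let summu := sumI mu in
  (* (a) randomized sampling *)
  (forall (p : 'I_N -> R) (q : seq {set 'I_N} -> {set 'I_N} -> R),
     (forall i, 0 < p i) -> sampling_kernel q -> sampling_lower_bound q p ->
     let xi := fun i => (INR N - gam i * L i) / INR N in
     let c := minI (fun i => xi i * p i / gam i)
              / maxI (fun i => (INR N - gam i * mu i) / (gam i ^ 2 * mu i)) in
     (forall k : nat,
        expect q k [::] (fun h => phiR f g (zk h) - phistar) <= D0 * (1 - c) ^ k /\
        / 2 * expect q k [::] (fun h => norm2 (vsub (zk h) xstar))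
          <= INR N * D0 / summu * (1 - c) ^ k) /\
     (let kappa := fun i => L i / mu i in
      let w := fun i => (sqrt (kappa i) + sqrt (kappa i - 1)) ^ 2 in
      (forall i, 1 < kappa i) ->
      (forall i, gam i = INR N / mu i * (1 - sqrt (1 - / kappa i))) ->
      (forall i, p i = w i / sumI w) ->
      let c' := / sumI w in
      forall k : nat,
        expect q k [::] (fun h => phiR f g (zk h) - phistar) <= D0 * (1 - c') ^ k /\
        / 2 * expect q k [::] (fun h => norm2 (vsub (zk h) xstar))
          <= INR N * D0 / summu * (1 - c') ^ k)) /\
  (* (b) shuffled cyclic sampling *)
  (forall pi : nat -> {perm 'I_N},
     let delta := minI (fun i => gam i * mu i / INR N) in
     let Delta := maxI (fun i => gam i * L i / INR N) in
     let c := delta * (1 - Delta) / (INR N * (2 - delta) ^ 2 * (1 - delta)) in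
     forall nu : nat,
       phiR f g (zk (shuffled_hist pi (nu * N))) - phistar <= D0 * (1 - c) ^ nu /\
       / 2 * norm2 (vsub (zk (shuffled_hist pi (nu * N))) xstar)
         <= INR N * D0 / summu * (1 - c) ^ nu).

Proof.
exact: (@main n N HN f df L mu Hgrad HL Hmu_pos Hsc g Hg_convex xstar Hxstar gam Hgam prox Hprox xinit ginit Hxinit).
Qed.
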